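(* Algorithm DLE solves the disconnecting leader election problem: for every fair execution starting from a permitted initial configuration, all particles eventually reach a final state, and a configuration is reached in which exactly one particle has status $leader$ and all other particles have status $follower$.
   Context: Geometry. The triangular grid $G$ has as vertices (''points'') the points of the regular triangular lattice in the plane, adjacent iff at unit distance; each point has six incident edges, cyclically ordered clockwise. A shape is a finite set of points (identified with its induced subgraph). For a connected shape $S$: the unbounded face is the outer face; a bounded face containing a grid point not in $S$ is a hole, whose grid points are hole points; the area of $S$ is $S$ together with its hole points; $S$ is simply-connected if it has no holes; the outer boundary is the set of points of $S$ on the boundary of the outer face; a boundary point is a point of $S$ adjacent to a point not in $S$. For a boundary point $v$, a local boundary $B$ of $v$ w.r.t. $S$ is a maximal clockwise cyclic interval of consecutive edges at $v$ leading to points not in $S$, with boundary count $c(v,B)=|B|-2$. $v$ is redundant if its neighbors in $S$ induce a connected subgraph; erodable if redundant and on the outer boundary (then it has a single local boundary $B$); SCE (strictly convex and erodable) if erodable and $c(v,B)>0$. Model (amoebot, strong scheduler). Anonymous particles with constant memory each occupy one point (contracted) or two adjacent points (expanded; a head and a tail); no point is occupied twice. Each particle labels the edges at its occupied point by ports $0,\dots,5$; all particles share the same (clockwise) chirality, and a particle knows the port number a neighboring particle uses for their common edge. Particles communicate by reading and writing the memories of neighboring particles. A contracted particle may expand into an adjacent unoccupied point (which becomes its head); an expanded particle may contract into either of its points; handovers between an expanded and a contracted neighbor are allowed. An execution is a sequence of atomic activations of single particles; in an activation a particle reads its neighbors' memories, computes, updates its own and neighbors' memories, and performs at most one movement. A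 particle in a final state does nothing when activated. An execution is fair if each particle is activated infinitely often; a round is a minimal execution fragment in which every particle is activated at least once. A permitted initial configuration $C_0$ has all particles contracted, at least one particle, and the set $S_P(C_0)$ of occupied points connected. Input: each particle knows, for each port $i$, whether the point reached via port $i$ lies in the outer face of $S_P(C_0)$. The system's shape need not remain connected. Disconnecting leader election: each particle has an output $status \in \{undecided, leader, follower\}$; the goal predicate is that exactly one particle is $leader$ and all others are $follower$. An algorithm solves it if in every fair execution all particles reach a final state and a configuration satisfying the predicate is reached. Algorithm DLE. It maintains a set $S_e$ of eligible points, initially the area of $S_P(C_0)$; points are only removed, never added. Each particle $p$ has $status$ (initially $undecided$) and $eligible[0..5]$ (initially $eligible[i]$ true iff the point via port $i$ is not in the outer face of $S_P(C_0)$), referring to points adjacent to $p$'s head. On activation: (a) if $p$ is expanded, it contracts into its head; (b) else if $p$ and all its neighbors have status $\ne undecided$, $p$ terminates (enters a final state); (c) else if $p.status=undecided$ ($p$ contracted at point $v$): if by its $eligible$ array no neighbor of $v$ is in $S_e$, it sets $status:=leader$; else if $v$ is SCE w.r.t. $S_e$, then $v$ is removed from $S_e$ and every neighboring particle whose head is adjacent to $v$ sets its $eligible$ entry for $v$ to false; then, if $v$ has an adjacent point $u\in S_e$ not occupied by any particle, $p$ sets its $eligible$ entries to true except the one for the port from $u$ back to $v$ (set false) and expands into $u$; otherwise $p$ sets $status:=follower$. In all other cases $p$ does nothing. *)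

(* Defs.v *)
From mathcomp Require Import all_boot ssralg ssrnum ssrint.
Set Implicit Arguments. Unset Strict Implicit. Unset Printing Implicit Defensive.

(* Points of the triangular lattice in axial coordinates (a,b) |-> a*e1 + b*e2
   with e1 = (1,0), e2 = (1/2, sqrt 3 / 2). *)
Definition point := (int * int)%type.

(* The six unit directions, in clockwise order starting from e1:
   0deg, -60deg, -120deg, 180deg, 120deg, 60deg. Direction i+3 is opposite to i. *)
Definition dirs : seq point :=
  [:: (Posz 1, Posz 0); (Posz 1, Negz 0); (Posz 0, Negz 0);
      (Negz 0, Posz 0); (Negz 0, Posz 1); (Posz 0, Posz 1)].
Definition dir (i : nat) : point := nth (Posz 0, Posz 0) dirs (i %% 6).

Definition nb (v : point) (i : nat) : point := ((v.1 + (dir i).1)%R, (v.2 + (dir i).2)%R).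

Definition adj (v w : point) : Prop := exists i : nat, w = nb v i.

Inductive reach (A : point -> Prop) : point -> point -> Prop :=
| reach_refl x : A x -> reach A x x
| reach_step x y z : A x -> adj x y -> reach A y z -> reach A x z.

Definition connected_pts (A : point -> Prop) : Prop :=
  forall a b, A a -> A b -> reach A a b.

Definition pnorm (r : point) : nat := (absz r.1 + absz r.2)%N.

(* q lies in the outer (unbounded) face of the finite shape S: q is not in S and
   q is joined, through grid points not in S, to points arbitrarily far away. *)
Definition outer (S : point -> Prop) (q : point) : Prop :=
  forall N : nat, exists r, reach (fun x => ~ S x) q r /\ (N <= pnorm r)%N.

(* area = S together with its hole points = points not in the outer face *)
Definition area (S : point -> Prop) (q : point) : Prop := ~ outer S q.

Definition boundary_point (S : point -> Prop) (v : point) : Prop :=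
  S v /\ exists i, ~ S (nb v i).

Definition outer_boundary (S : point -> Prop) (v : point) : Prop :=
  S v /\ exists i, outer S (nb v i).

Definition redundant (S : point -> Prop) (v : point) : Prop :=
  connected_pts (fun w => S w /\ adj v w).

(* B = the clockwise cyclic interval of edges i, i+1, ..., i+k-1 at v,
   all leading to points not in S, and maximal. |B| = k. *)
Definition local_boundary (S : point -> Prop) (v : point) (i k : nat) : Prop :=
  [/\ (1 <= k <= 6)%N,
      (forall j, (j < k)%N -> ~ S (nb v (i + j)))
    & (k = 6 \/ (S (nb v (i + k)) /\ S (nb v (i + 5))))].

Definition erodable (S : point -> Prop) (v : point) : Prop :=
  [/\ boundary_point S v, redundant S v & outer_boundary S v].

(* strictly convex and erodable: c(v,B) = |B| - 2 > 0 *)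
Definition SCE (S : point -> Prop) (v : point) : Prop :=
  erodable S v /\ exists i k, local_boundary S v i k /\ (0 < Posz k - Posz 2)%R.

Inductive status := Undecided | Leader | Follower.

(* A configuration: each particle occupies its tail and head (contracted iff
   equal); its memory holds status, the eligible array (indexed by the six
   directions at its head; ports are a fixed rotation of directions by shared
   chirality), and a flag for final state. cSe is the set S_e of eligible points. *)
Record config (P : Type) := Config {
  ctail : P -> point;
  chead : P -> point;
  cstatus : P -> status;
  celig : P -> 'I_6 -> Prop;
  cfinal : P -> bool;
  cSe : point -> Prop }.

Section Step.
Variable P : finType.

Definition upd T (f : P -> T) (x : P) (y : T) : P -> T :=
  fun z => if z == x then y else f z.

Definition occupied (C : config P) (u : point) : Prop :=
  exists q, chead C q = u \/ ctail C q = u.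

Definition occ (C : config P) (p : P) (x : point) : Prop :=
  chead C p = x \/ ctail C p = x.

Definition nbr (C : config P) (p q : P) : Prop :=
  q <> p /\ exists x y, [/\ occ C p x, occ C q y & adj x y].

Definition term_cond (C : config P) (p : P) : Prop :=
  cstatus C p <> Undecided /\ forall q, nbr C p q -> cstatus C q <> Undecided.

(* outcome of the erosion branch, p contracted at v, v SCE w.r.t. S_e *)
Definition erode_result (C : config P) (p : P) (v : point) (C' : config P) : Prop :=
  let Se' := fun x => cSe C x /\ x <> v in
  let E' := fun q (i : 'I_6) => celig C q i /\ nb (chead C q) i <> v in
  (exists i : 'I_6,
     let u := nb v i in
     [/\ Se' u, ~ occupied C u &
      C' = Config (ctail C) (upd (chead C) p u) (cstatus C)
                  (upd E' p (fun j : 'I_6 => (j : nat) <> ((i + 3) %% 6)%N))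
                  (cfinal C) Se'])
  \/
  ((forall i : 'I_6, ~ (Se' (nb v i) /\ ~ occupied C (nb v i))) /\
   C' = Config (ctail C) (chead C) (upd (cstatus C) p Follower) E' (cfinal C) Se').

(* One atomic activation of particle p under Algorithm DLE. The choice of the
   free eligible point u is left nondeterministic. *)
Definition dle_step (C : config P) (p : P) (C' : config P) : Prop :=
  (cfinal C p /\ C' = C)
  \/ (~~ cfinal C p /\ chead C p <> ctail C p /\
      C' = Config (upd (ctail C) p (chead C p)) (chead C) (cstatus C) (celig C)
                  (cfinal C) (cSe C))
  \/ (~~ cfinal C p /\ chead C p = ctail C p /\
      ( (term_cond C p /\
          C' = Config (ctail C) (chead C) (cstatus C) (celig C)
                      (upd (cfinal C) p true) (cSe C))
      \/ (~ term_cond C p /\ cstatus C p = Undecided /\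
          ( ((forall i, ~ celig C p i) /\
              C' = Config (ctail C) (chead C) (upd (cstatus C) p Leader) (celig C)
                          (cfinal C) (cSe C))
          \/ ((exists i, celig C p i) /\ SCE (cSe C) (chead C p) /\
              erode_result C p (chead C p) C')
          \/ ((exists i, celig C p i) /\ ~ SCE (cSe C) (chead C p) /\ C' = C)))
      \/ (~ term_cond C p /\ cstatus C p <> Undecided /\ C' = C))).

Definition shape_of (pos : P -> point) : point -> Prop := fun x => exists p, pos p = x.

Definition permitted (pos : P -> point) : Prop :=
  [/\ (0 < #|P|)%N, injective pos & connected_pts (shape_of pos)].

(* initial memory of DLE, computed from the input (outer-face information) *)
Definition init_config (pos : P -> point) : config P :=
  Config pos pos (fun _ => Undecided)
         (fun p (i : 'I_6) => ~ outer (shape_of pos) (nb (pos p) i))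
         (fun _ => false) (area (shape_of pos)).

Definition fair (a : nat -> P) : Prop := forall p n, exists t, (n <= t)%N /\ a t = p.

Definition execution (pos : P -> point) (C : nat -> config P) (a : nat -> P) : Prop :=
  C 0 = init_config pos /\ forall t, dle_step (C t) (a t) (C t.+1).

End Step.

(* Main.v *)
Require Import Defs.
From mathcomp Require Import all_boot ssralg ssrnum ssrint.
From mathcomp Require Import zify.
From Stdlib Require Import Classical ClassicalEpsilon FunctionalExtensionality PropExtensionality.
Set Implicit Arguments. Unset Strict Implicit. Unset Printing Implicit Defensive.
Import GRing.Theory Num.Theory.
Local Open Scope ring_scope.

Ltac atoms :=
  repeat match goal with
  | |- context [(?x == ?y :> int)] =>
      let H := fresh "H" in case H: (x == y); move/eqP: H => H; try (exfalso; lia)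
  | |- context [(?x < ?y :> int)] =>
      let H := fresh "H" in case H: (x < y); move/idP: H => H; try (exfalso; lia)
  end.

Lemma mod6_cases (i : nat) : (i %% 6 = 0 \/ i %% 6 = 1 \/ i %% 6 = 2 \/ i %% 6 = 3 \/
   i %% 6 = 4 \/ i %% 6 = 5)%N.
Proof.
have : (i %% 6 < 6)%N by rewrite ltn_mod.
case: (i %% 6)%N => [|[|[|[|[|[|k]]]]]] //= _; tauto.
Qed.

Lemma nb_mod v i : nb v (i %% 6) = nb v i.
Proof. by rewrite /nb /dir modn_mod. Qed.

Lemma nbE v i : nb v i =
  match (i %% 6)%N with
  | 0 => (v.1 + 1, v.2)
  | 1 => (v.1 + 1, v.2 - 1)
  | 2 => (v.1, v.2 - 1)
  | 3 => (v.1 - 1, v.2)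
  | 4 => (v.1 - 1, v.2 + 1)
  | _ => (v.1, v.2 + 1) end.
Proof.
rewrite -nb_mod; case: (mod6_cases i) => [->|[->|[->|[->|[->|->]]]]];
 rewrite /nb /dir /=; case: v => a b /=; congr pair; lia.
Qed.

Lemma nb0 v : nb v 0 = (v.1 + 1, v.2). Proof. by rewrite nbE. Qed.
Lemma nb1 v : nb v 1 = (v.1 + 1, v.2 - 1). Proof. by rewrite nbE. Qed.
Lemma nb2 v : nb v 2 = (v.1, v.2 - 1). Proof. by rewrite nbE. Qed.
Lemma nb3 v : nb v 3 = (v.1 - 1, v.2). Proof. by rewrite nbE. Qed.
Lemma nb4 v : nb v 4 = (v.1 - 1, v.2 + 1). Proof. by rewrite nbE. Qed.
Lemma nb5 v : nb v 5 = (v.1, v.2 + 1). Proof. by rewrite nbE. Qed.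

Lemma nb_back v i : nb (nb v i) (i + 3) = v.
Proof.
rewrite (nbE v) (nbE _ (i+3)) -modnDml.
case: (mod6_cases i) => [->|[->|[->|[->|[->|->]]]]] /=; case: v => a b /=; congr pair; lia.
Qed.

Lemma adj_sym x y : adj x y -> adj y x.
Proof. by case=> i ->; exists (i + 3)%N; rewrite nb_back. Qed.

Lemma adj_irr v : ~ adj v v.
Proof.
case=> i; rewrite nbE; case: (mod6_cases i) => [->|[->|[->|[->|[->|->]]]]] /=;
 case: v => a b /= [] *; lia.
Qed.

Lemma nb_neq v i : nb v i <> v.
Proof. by move=> E; apply: (@adj_irr v); exists i. Qed.

Lemma nb_inj v i j : nb v i = nb v j -> (i %% 6 = j %% 6)%N.
Proof.
rewrite (nbE v i) (nbE v j).
case: (mod6_cases i) => [->|[->|[->|[->|[->|->]]]]];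
case: (mod6_cases j) => [->|[->|[->|[->|[->|->]]]]] //=; case: v => a b /= [] *; lia.
Qed.

Definition adjb (x y : point) : bool := has (fun i => y == nb x i) (iota 0 6).

Lemma adjP x y : reflect (adj x y) (adjb x y).
Proof.
apply: (iffP hasP).
  by case=> i _ /eqP ->; exists i.
case=> i ->; exists (i %% 6)%N; last by rewrite nb_mod.
by rewrite mem_iota add0n ltn_mod.
Qed.

Section Reach.
Implicit Types (A B S : point -> Prop).

Lemma reach_A1 A x y : reach A x y -> A x.
Proof. by case. Qed.

Lemma reach_A2 A x y : reach A x y -> A y.
Proof. by elim. Qed.

Lemma reach_trans A x y z : reach A x y -> reach A y z -> reach A x z.
Proof.
elim=> [//|x1 y1 z1 Ax Axy _ IH] H; apply: reach_step Ax Axy (IH H).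
Qed.

Lemma reach_snoc A x y z : reach A x y -> adj y z -> A z -> reach A x z.
Proof.
move=> H Hyz Az; apply: reach_trans (H) _.
exact: reach_step (reach_A2 H) Hyz (reach_refl Az).
Qed.

Lemma reach_sym A x y : reach A x y -> reach A y x.
Proof.
elim=> [x0 Ax|x1 y1 z1 Ax Axy Hr IH]; first exact: reach_refl.
exact: reach_snoc IH (adj_sym Axy) Ax.
Qed.

Lemma reach_mono A B x y : (forall z, A z -> B z) -> reach A x y -> reach B x y.
Proof.
move=> AB; elim=> [x0 Ax|x1 y1 z1 Ax Axy _ IH]; first exact/reach_refl/AB.
exact: reach_step (AB _ Ax) Axy IH.
Qed.

Lemma reach_in_aux A x y : reach A x y -> forall a, reach A a x ->
  reach (fun z => A z /\ reach A a z) x y.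
Proof.
elim=> [x0 Ax|x1 y1 z1 Ax Axy Hr IH] a Hax; first exact: reach_refl.
apply: (reach_step (conj Ax Hax) Axy (IH _ _)).
exact: reach_snoc Hax Axy (reach_A1 Hr).
Qed.

Lemma reach_in A x y : reach A x y -> reach (fun z => A z /\ reach A x z) x y.
Proof. by move=> H; apply: reach_in_aux H _ (reach_refl (reach_A1 H)). Qed.

Lemma connected_ext A B : (forall z, A z <-> B z) -> connected_pts A -> connected_pts B.
Proof.
move=> AB CA a b /AB Aa /AB Ab; apply: reach_mono (CA _ _ Aa Ab) => z /AB //.
Qed.

Lemma outer_notS S x : outer S x -> ~ S x.
Proof. by case/(_ 0%N) => r [H _]; apply: (reach_A1 H). Qed.

Lemma outer_mono S S' x : (forall z, S' z -> S z) -> outer S x -> outer S' x.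
Proof.
move=> H O N; case: (O N) => r [Hr HN]; exists r; split=> //.
by apply: reach_mono Hr => z nS /H.
Qed.

Lemma outer_back S x y : reach (fun z => ~ S z) x y -> outer S y -> outer S x.
Proof.
move=> Hxy O N; case: (O N) => r [Hr HN]; exists r; split=> //.
exact: reach_trans Hxy Hr.
Qed.

Lemma outer_adj S x y : adj x y -> ~ S x -> outer S y -> outer S x.
Proof.
move=> Hxy nSx O; apply: (outer_back _ O).
exact: reach_step nSx Hxy (reach_refl (outer_notS O)).
Qed.

End Reach.

Definition ray (v : point) (i k : nat) : point := iter k (fun y => nb y i) v.

Lemma reach_ray A v i k : (forall j, (j <= k)%N -> A (ray v i j)) -> reach A v (ray v i k).
Proof.
elim: k => [|k IH] H; first exact: reach_refl (H 0%N isT).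
apply: reach_snoc (IH _) _ (H _ (leqnn _)); last by exists i.
by move=> j Hj; apply: H; rewrite (leq_trans Hj).
Qed.

Lemma ray5 v k : ray v 5 k = (v.1, v.2 + k%:Z).
Proof. elim: k => [|k IH] /=; first by case: v => a b /=; congr pair; lia.
by rewrite IH nb5 /=; congr pair; lia. Qed.
Lemma ray2 v k : ray v 2 k = (v.1, v.2 - k%:Z).
Proof. elim: k => [|k IH] /=; first by case: v => a b /=; congr pair; lia.
by rewrite IH nb2 /=; congr pair; lia. Qed.
Lemma ray0 v k : ray v 0 k = (v.1 + k%:Z, v.2).
Proof. elim: k => [|k IH] /=; first by case: v => a b /=; congr pair; lia.
by rewrite IH nb0 /=; congr pair; lia. Qed.
Lemma ray3 v k : ray v 3 k = (v.1 - k%:Z, v.2).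
Proof. elim: k => [|k IH] /=; first by case: v => a b /=; congr pair; lia.
by rewrite IH nb3 /=; congr pair; lia. Qed.

Lemma ray_far v i N : (i == 0 \/ i == 2 \/ i == 3 \/ i == 5)%N ->
  (N <= pnorm (ray v i (N + pnorm v)))%N.
Proof.
rewrite /pnorm; case: v => a b.
by case=> [/eqP->|[/eqP->|[/eqP->|/eqP->]]];
  rewrite ?ray0 ?ray2 ?ray3 ?ray5 /=; lia.
Qed.

Lemma outer_ray S x i : (i == 0 \/ i == 2 \/ i == 3 \/ i == 5)%N ->
  (forall k, ~ S (ray x i k)) -> outer S x.
Proof.
move=> Hi H N; exists (ray x i (N + pnorm x)); split; last exact: ray_far.
by apply: reach_ray => j _; apply: H.
Qed.

Definition chi (q u w : point) : bool :=
  ((u.2 == q.2) && (w.2 == q.2 - 1) && (q.1 < u.1)) ||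
  ((w.2 == q.2) && (u.2 == q.2 - 1) && (q.1 < w.1)).
Definition edge (u w a b : point) : bool :=
  ((u.1 == a.1) && (u.2 == a.2) && (w.1 == b.1) && (w.2 == b.2)) ||
  ((u.1 == b.1) && (u.2 == b.2) && (w.1 == a.1) && (w.2 == a.2)).
Definition cr (q x0 : point) (s : seq point) : nat :=
  count (fun e => chi q e.1 e.2) (zip (x0 :: s) s).
Definition Rrow (q x : point) : bool := (x.2 == q.2) && (q.1 < x.1).

Definition corr5 q u w := edge u w q (nb q 0) (+) edge u w (nb q 0) (nb q 5).
Definition corr4 q u w := edge u w q (nb q 0) (+) edge u w q (nb q 5).
Definition corr0 q u w := ((u.1 == (nb q 0).1) && (u.2 == (nb q 0).2) && (w.2 == q.2 - 1)) ||
                          ((w.1 == (nb q 0).1) && (w.2 == (nb q 0).2) && (u.2 == q.2 - 1)).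

Lemma E5 (q u : point) (i : nat) :
  chi q u (nb u i) (+) chi (nb q 5) u (nb u i) (+) (Rrow q u (+) Rrow q (nb u i)) =
  corr5 q u (nb u i).
Proof.
rewrite -nb_mod; have : (i %% 6 < 6)%N by rewrite ltn_mod.
case: u => a b; case: q => c d.
case: (i %% 6)%N => [|[|[|[|[|[|j]]]]]] // _;
rewrite /corr5 /Rrow /chi /edge /nb /dir /= ?addr0; atoms; done.
Qed.

Lemma E4 (q u : point) (i : nat) :
  chi q u (nb u i) (+) chi (nb q 4) u (nb u i) (+) (Rrow q u (+) Rrow q (nb u i)) =
  corr4 q u (nb u i).
Proof.
rewrite -nb_mod; have : (i %% 6 < 6)%N by rewrite ltn_mod.
case: u => a b; case: q => c d.
case: (i %% 6)%N => [|[|[|[|[|[|j]]]]]] // _;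
rewrite /corr4 /Rrow /chi /edge /nb /dir /= ?addr0; atoms; done.
Qed.

Lemma E0 (q u : point) (i : nat) :
  chi q u (nb u i) (+) chi (nb q 0) u (nb u i) (+) (false (+) false) =
  corr0 q u (nb u i).
Proof.
rewrite -nb_mod; have : (i %% 6 < 6)%N by rewrite ltn_mod.
case: u => a b; case: q => c d.
case: (i %% 6)%N => [|[|[|[|[|[|j]]]]]] // _;
rewrite /corr0 /chi /nb /dir /= ?addr0; atoms; done.
Qed.


Lemma Elow (r u : point) (i : nat) : r.1 < u.1 -> r.1 < (nb u i).1 ->
  chi r u (nb u i) = ((r.2 - 1 < u.2) (+) (r.2 - 1 < (nb u i).2)).
Proof.
rewrite -nb_mod; have : (i %% 6 < 6)%N by rewrite ltn_mod.
case: u => a b; case: r => c d.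
case: (i %% 6)%N => [|[|[|[|[|[|j]]]]]] // _;
rewrite /chi /nb /dir /= ?addr0 => h1 h2; atoms; done.
Qed.

Lemma odd_count_xor (T : Type) (f g : T -> bool) (s : seq T) :
  odd (count (fun x => f x (+) g x) s) = odd (count f s) (+) odd (count g s).
Proof.
elim: s => //= x s IH; rewrite !oddD IH.
by case: (f x); case: (g x); case: (odd (count f s)); case: (odd (count g s)).
Qed.

Lemma tele (R : point -> bool) (x0 : point) (s : seq point) :
  odd (count (fun e => R e.1 (+) R e.2) (zip (x0 :: s) s)) = R x0 (+) R (last x0 s).
Proof.
elim: s x0 => [|y s IH] x0 /=; first by rewrite addbb.
by rewrite oddD IH /=; case: (R x0); case: (R y); case: (R (last y s)).
Qed.

Lemma mem_zip2 (s t : seq point) e : e \in zip s t -> e.1 \in s /\ e.2 \in t.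
Proof.
elim: s t => [|x s IH] [|y t] //=; rewrite in_cons => /orP[/eqP->|/IH[h1 h2]].
  by rewrite !mem_head.
by rewrite !in_cons h1 h2 !orbT.
Qed.

Lemma path_edges (x0 : point) s : path adjb x0 s ->
  forall e, e \in zip (x0 :: s) s -> exists i, e.2 = nb e.1 i.
Proof.
elim: s x0 => [|y s IH] x0 //= /andP[/adjP [i Hi] Hp] e; rewrite in_cons => /orP[/eqP->|H].
  by exists i.
exact: IH Hp e H.
Qed.

Lemma cr_pair (q q' : point) (F : point -> point -> bool) (R : point -> bool) x0 s :
  path adjb x0 s ->
  (forall u i, chi q u (nb u i) (+) chi q' u (nb u i) (+) (R u (+) R (nb u i)) = F u (nb u i)) ->
  odd (cr q x0 s) (+) odd (cr q' x0 s) =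
  odd (count (fun e => F e.1 e.2) (zip (x0 :: s) s)) (+) (R x0 (+) R (last x0 s)).
Proof.
move=> Hp HF.
rewrite (@eq_in_count _ _ (fun e => chi q e.1 e.2 (+) chi q' e.1 e.2 (+) (R e.1 (+) R e.2))); last first.
  by move=> e /(path_edges Hp) [i ->]; rewrite HF.
rewrite odd_count_xor odd_count_xor tele /cr.
by case: (odd _); case: (odd _); case: (R x0 (+) R (last x0 s)).
Qed.

Lemma cr_pair_closed (q q' : point) (F : point -> point -> bool) (R : point -> bool) x0 s :
  path adjb x0 s -> last x0 s = x0 ->
  (forall u i, chi q u (nb u i) (+) chi q' u (nb u i) (+) (R u (+) R (nb u i)) = F u (nb u i)) ->
  odd (cr q x0 s) (+) odd (cr q' x0 s) =
  odd (count (fun e => F e.1 e.2) (zip (x0 :: s) s)).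
Proof.
move=> Hp Hl HF; rewrite (@cr_pair q q' F R x0 s Hp HF) Hl addbb.
by case: (odd _).
Qed.

Lemma count_corr0 (F : point -> point -> bool) (a b : point) x0 s :
  (forall u w, F u w -> [|| u == a, u == b, w == a | w == b]) ->
  a \notin x0 :: s -> b \notin x0 :: s ->
  count (fun e => F e.1 e.2) (zip (x0 :: s) s) = 0%N.
Proof.
move=> HF Ha Hb; apply/eqP; rewrite -leqn0 leqNgt -has_count; apply/hasP => -[e He /HF].
case/mem_zip2: He => h1 h2.
have h2' : e.2 \in x0 :: s by rewrite in_cons h2 orbT.
by case/or4P => /eqP E; move: Ha Hb; rewrite -?E ?h1 ?h2'.
Qed.

Lemma edge_end u w a b : edge u w a b -> [|| u == a, u == b, w == a | w == b].
Proof.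
case: u w a b => [u1 u2] [w1 w2] [a1 a2] [b1 b2].
rewrite /edge /= !xpair_eqE.
by case/orP => /andP[/andP[/andP[->->]->]->]; rewrite ?orbT.
Qed.

Lemma pt_eq (u a : point) : u.1 == a.1 -> u.2 == a.2 -> u == a.
Proof. by case: u a => [u1 u2] [a1 a2] /= /eqP-> /eqP->. Qed.

Lemma edge_end2 u w a b : edge u w a b -> (u == a) || (w == a) -> False \/ True.
Proof. by right. Qed.

Lemma edge_ends u w a b : edge u w a b -> ((u == a) || (w == a)) && ((u == b) || (w == b)).
Proof.
case: u w a b => [u1 u2] [w1 w2] [a1 a2] [b1 b2].
rewrite /edge /= !xpair_eqE.
by case/orP => /andP[/andP[/andP[->->]->]->]; rewrite ?orbT.
Qed.

Lemma xorb_or a b : a (+) b -> a || b.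
Proof. by case: a; case: b. Qed.

Lemma L1 (q : point) i x0 s :
  path adjb x0 s -> last x0 s = x0 ->
  q \notin x0 :: s -> nb q i \notin x0 :: s ->
  odd (cr q x0 s) = odd (cr (nb q i) x0 s).
Proof.
move=> Hp Hl.
suff key : forall q i, (i = 0 \/ i = 4 \/ i = 5)%N ->
  q \notin x0 :: s -> nb q i \notin x0 :: s ->
  odd (cr q x0 s) = odd (cr (nb q i) x0 s).
  have key' : forall q i, (i %% 6 = 0 \/ i %% 6 = 4 \/ i %% 6 = 5)%N ->
    q \notin x0 :: s -> nb q i \notin x0 :: s ->
    odd (cr q x0 s) = odd (cr (nb q i) x0 s).
    by move=> q1 i1 H1; rewrite -(nb_mod q1 i1); apply: key.
  move=> Hq Hq'.
  have E : q = nb (nb q i) (i + 3) by rewrite nb_back.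
  case: (mod6_cases i) => [Hi|[Hi|[Hi|[Hi|[Hi|Hi]]]]].
  - by apply: key' => //; left.
  - rewrite {1}E -(key' (nb q i) (i + 3)%N) //; last by rewrite -E.
    by rewrite -modnDml Hi; tauto.
  - rewrite {1}E -(key' (nb q i) (i + 3)%N) //; last by rewrite -E.
    by rewrite -modnDml Hi; tauto.
  - rewrite {1}E -(key' (nb q i) (i + 3)%N) //; last by rewrite -E.
    by rewrite -modnDml Hi; tauto.
  - by apply: key' => //; right; left.
  - by apply: key' => //; right; right.
move=> {}q {}i Hi; case: Hi => [->|[->|->]] Hq Hq'.
- have := @cr_pair q (nb q 0) _ (fun _ => false) _ _ Hp (E0 q).
  rewrite (@count_corr0 _ q (nb q 0)) //=.
    by case: (odd (cr q x0 s)); case: (odd (cr _ x0 s)).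
  move=> u w; rewrite /corr0 => /orP[/andP[/andP[h1 h2] _]|/andP[/andP[h1 h2] _]].
    by rewrite (pt_eq h1 h2) !orbT.
  by rewrite (pt_eq h1 h2) !orbT.
- have := @cr_pair_closed q (nb q 4) _ (Rrow q) _ _ Hp Hl (E4 q).
  rewrite (@count_corr0 _ q (nb q 4)) //.
    by case: (odd (cr q x0 s)); case: (odd (cr _ x0 s)).
  move=> u w; rewrite /corr4 => /xorb_or /orP[] /edge_ends /andP[/orP[]/eqP-> _]; rewrite eqxx ?orbT //.
- have := @cr_pair_closed q (nb q 5) _ (Rrow q) _ _ Hp Hl (E5 q).
  rewrite (@count_corr0 _ q (nb q 5)) //.
    by case: (odd (cr q x0 s)); case: (odd (cr _ x0 s)).
  move=> u w; rewrite /corr5 => /xorb_or /orP[] /edge_ends /andP[].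
    by case/orP=> /eqP-> _; rewrite eqxx ?orbT.
  by move=> _ /orP[]/eqP->; rewrite eqxx ?orbT.
Qed.

Definition inbox (M : int) (v : point) : Prop := -M <= v.1 /\ v.1 <= M /\ -M <= v.2 /\ v.2 <= M.

Lemma chi_out (r u w : point) M : inbox M u -> inbox M w ->
  (M < r.2 \/ r.2 < -M \/ M < r.1) -> chi r u w = false.
Proof.
case: u w r => [a b] [c d] [e f]; rewrite /inbox /= => h1 h2 h3.
by apply/negbTE; rewrite /chi /=; apply/negP => /orP[] /andP[/andP[/eqP g1 /eqP g2] g3]; lia.
Qed.

Lemma Elow' (r u : point) i M : inbox M u -> r.1 < -M -> inbox M (nb u i) ->
  chi r u (nb u i) = ((r.2 - 1 < u.2) (+) (r.2 - 1 < (nb u i).2)).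
Proof.
move=> [h1 _] h2 [h3 _]; apply: Elow; lia.
Qed.

Lemma L2 (r x0 : point) s (M : int) : path adjb x0 s -> last x0 s = x0 ->
  (forall v, v \in x0 :: s -> inbox M v) ->
  (M < r.2 \/ r.2 < -M \/ M < r.1 \/ r.1 < -M) -> ~~ odd (cr r x0 s).
Proof.
move=> Hp Hl Hb Hr.
have Hb2 : forall e, e \in zip (x0 :: s) s -> inbox M e.1 /\ inbox M e.2.
  move=> e /mem_zip2 [h1 h2]; split; apply: Hb => //.
  by rewrite in_cons h2 orbT.
have [Hr'|Hr'] : (M < r.2 \/ r.2 < -M \/ M < r.1) \/ r.1 < -M by tauto.
  suff -> : cr r x0 s = 0%N by [].
  apply/eqP; rewrite -leqn0 leqNgt -has_count; apply/hasP => -[e /Hb2 [h1 h2]].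
  by rewrite (chi_out h1 h2 Hr').
rewrite /cr (@eq_in_count _ _ (fun e => (r.2 - 1 < e.1.2) (+) (r.2 - 1 < e.2.2))); last first.
  move=> e He; have [h1 h2] := Hb2 e He.
  case: (path_edges Hp He) => i Ei; move: h2; rewrite Ei => h2.
  by rewrite (Elow' (M := M)).
by rewrite (tele (fun x : point => r.2 - 1 < x.2)) Hl addbb.
Qed.

Lemma cr_outer (S : point -> Prop) q x0 s M : path adjb x0 s -> last x0 s = x0 ->
  (forall v, v \in x0 :: s -> S v) -> (forall v, S v -> inbox M v) ->
  outer S q -> ~~ odd (cr q x0 s).
Proof.
move=> Hp Hl HS Hb O.
case: (O (absz M * 2 + 2)%N) => r [Hr Hn].
have Hfar : ~~ odd (cr r x0 s).
  apply: (L2 (M := M)) => //; first by move=> v /HS /Hb.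
  rewrite /pnorm in Hn; lia.
suff : forall x, reach (fun z => ~ S z) x r -> odd (cr x x0 s) = odd (cr r x0 s).
  by move=> H; rewrite (H _ Hr).
move=> x; elim=> [//|x1 y1 z1 nS Hxy Hyz IH].
rewrite -IH; case: Hxy => i Ei; rewrite Ei; apply: L1 => //.
  by apply/negP => /HS.
by rewrite -Ei; apply/negP => /HS; apply: (reach_A1 Hyz).
Qed.

Definition Sm (S : point -> Prop) (v : point) : point -> Prop := fun x => S x /\ x <> v.
Definition holefree (S : point -> Prop) : Prop := forall x, ~ S x -> outer S x.
Definition covered (S : point -> Prop) (l : seq point) : Prop := forall x, S x -> x \in l.
Definition lexle (x v : point) : Prop := x.2 < v.2 \/ (x.2 = v.2 /\ x.1 <= v.1).
Definition TRpt (S : point -> Prop) (v : point) : Prop := S v /\ forall x, S x -> lexle x v.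

Lemma pointP (x y : point) : x.1 = y.1 -> x.2 = y.2 -> x = y.
Proof. by case: x y => [a b] [c d] /= -> ->. Qed.

Lemma lexle_total x y : lexle x y \/ lexle y x.
Proof. rewrite /lexle; case: x y => [a b] [c d] /=; lia. Qed.

Lemma lexle_trans x y z : lexle x y -> lexle y z -> lexle x z.
Proof. rewrite /lexle; case: x y z => [a b] [c d] [e f] /=; lia. Qed.

Lemma TR_exists S l x0 : covered S l -> S x0 -> exists v, TRpt S v.
Proof.
move=> Hc Sx0.
suff : forall l : seq point, (exists x, S x /\ x \in l) ->
  exists v, S v /\ forall x, S x -> x \in l -> lexle x v.
  case/(_ l); first by exists x0; split=> //; apply: Hc.
  by move=> v [Sv Hv]; exists v; split=> // x Sx; apply: Hv (Hc _ Sx).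
elim=> [|y l' IH]; first by case=> x [_].
move=> Hex.
case: (classic (exists x, S x /\ x \in l')) => [/IH [v [Sv Hv]]|Hno].
  case: (classic (S y)) => Sy.
    have [Hyv|Hvy] := lexle_total y v.
      exists v; split=> // x Sx; rewrite in_cons => /orP[/eqP->//|]; exact: Hv.
    exists y; split=> // x Sx; rewrite in_cons => /orP[/eqP->|/(Hv _ Sx)].
      by rewrite /lexle; right.
    by move=> H; apply: lexle_trans H Hvy.
  exists v; split=> // x Sx; rewrite in_cons => /orP[/eqP E|]; last exact: Hv.
  by rewrite E in Sx.
case: (classic (S y)) => Sy.
  exists y; split=> // x Sx; rewrite in_cons => /orP[/eqP->|Hx]; first by rewrite /lexle; right.
  by case: Hno; exists x.
exfalso; case: Hex => x [Sx]; rewrite in_cons => /orP[/eqP E|Hx].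
  by rewrite E in Sx.
by case: Hno; exists x.
Qed.

Ltac normnb :=
  repeat match goal with
  | |- context [nb ?v ?n] =>
      let m := eval vm_compute in (n %% 6)%N in
      lazymatch n with
      | m => fail
      | _ => rewrite -(nb_mod v n) (_ : (n %% 6 = m)%N); last by []
      end
  end.

Ltac crd := apply: pointP; rewrite ?nb0 ?nb1 ?nb2 ?nb3 ?nb4 ?nb5 /=; lia.

Lemma TR_out S v : TRpt S v -> [/\ ~ S (nb v 0), ~ S (nb v 4) & ~ S (nb v 5)].
Proof.
case=> Sv H; split=> /H; rewrite /lexle ?nb0 ?nb4 ?nb5 /=; lia.
Qed.

Lemma TR_nbrs S v w : TRpt S v -> adj v w -> S w ->
  w = nb v 1 \/ w = nb v 2 \/ w = nb v 3.
Proof.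
move=> /TR_out [h0 h4 h5] [i ->]; rewrite -nb_mod.
case: (mod6_cases i) => [->|[->|[->|[->|[->|->]]]]] //; tauto.
Qed.

Lemma SCE_TR S v : holefree S -> TRpt S v ->
  ~ (S (nb v 1) /\ ~ S (nb v 2) /\ S (nb v 3)) -> SCE S v.
Proof.
move=> Hf HT Hbad; have [h0 h4 h5] := TR_out HT.
have Sv := HT.1.
have a12 : adj (nb v 1) (nb v 2) by exists 3%N; crd.
have a23 : adj (nb v 2) (nb v 3) by exists 4%N; crd.
have av : forall i, adj v (nb v i) by move=> i; exists i.
split; first split.
- by split=> //; exists 5%N.
- move=> a b [Sa Ha] [Sb Hb].
  have r12 : S (nb v 1) -> S (nb v 2) -> reach (fun w => S w /\ adj v w) (nb v 1) (nb v 2).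
    move=> s1 s2; apply: reach_step (a12) _; [by split; [|apply: av]|apply: reach_refl; by split; [|apply: av]].
  have r23 : S (nb v 2) -> S (nb v 3) -> reach (fun w => S w /\ adj v w) (nb v 2) (nb v 3).
    move=> s2 s3; apply: reach_step (a23) _; [by split; [|apply: av]|apply: reach_refl; by split; [|apply: av]].
  have r13 : S (nb v 1) -> S (nb v 3) -> reach (fun w => S w /\ adj v w) (nb v 1) (nb v 3).
    move=> s1 s3; have s2 : S (nb v 2) by apply: NNPP => ns2; apply: Hbad.
    exact: reach_trans (r12 s1 s2) (r23 s2 s3).
  case: (TR_nbrs HT Ha Sa) => [Ea|[Ea|Ea]]; case: (TR_nbrs HT Hb Sb) => [Eb|[Eb|Eb]];
    subst a b; try by apply: reach_refl.
  + exact: r12.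
  + exact: r13.
  + exact/reach_sym/r12.
  + exact: r23.
  + exact/reach_sym/r13.
  + exact/reach_sym/r23.
- split=> //; exists 5%N; apply: Hf => //.
- have lb : forall i k, (1 <= k <= 6)%N -> (forall j, (j < k)%N -> ~ S (nb v (i + j))) ->
     (k = 6%N \/ (S (nb v (i + k)) /\ S (nb v (i + 5)))) -> (2 < k)%N ->
     exists i k, local_boundary S v i k /\ (0 < Posz k - Posz 2)%R.
    move=> i k H1 H2 H3 H4; exists i, k; split; first by rewrite /local_boundary; split.
    by rewrite subr_gt0 ltz_nat.
  case: (classic (S (nb v 3))) => s3.
    case: (classic (S (nb v 1))) => s1.
      apply: (lb 4%N 3%N) => //; last by right; normnb.
      by case=> [|[|[|j]]] // _; normnb.
    case: (classic (S (nb v 2))) => s2.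
      apply: (lb 4%N 4%N) => //; last by right; normnb.
      by case=> [|[|[|[|j]]]] // _; normnb.
    apply: (lb 4%N 5%N) => //; last by right; normnb.
    by case=> [|[|[|[|[|j]]]]] // _; normnb.
  case: (classic (S (nb v 1))) => s1; case: (classic (S (nb v 2))) => s2.
  + apply: (lb 3%N 4%N) => //; last by right; normnb.
    by case=> [|[|[|[|j]]]] // _; normnb.
  + apply: (lb 2%N 5%N) => //; last by right; normnb.
    by case=> [|[|[|[|[|j]]]]] // _; normnb.
  + apply: (lb 3%N 5%N) => //; last by right; normnb.
    by case=> [|[|[|[|[|j]]]]] // _; normnb.
  + apply: (lb 0%N 6%N) => //; last by left.
    by case=> [|[|[|[|[|[|j]]]]]] // _; normnb.
Qed.

Lemma reach_path A x y : reach A x y ->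
  exists s, [/\ path adjb x s, last x s = y & forall z, z \in x :: s -> A z].
Proof.
elim=> [x0 Ax|x1 y1 z1 Ax Axy _ [s [Hp Hl Hin]]].
  by exists [::]; split=> // z; rewrite inE => /eqP->.
exists (y1 :: s); split=> //=; first by rewrite Hp andbT; apply/adjP.
move=> z; rewrite in_cons => /orP[/eqP->//|]; exact: Hin.
Qed.

Lemma zip_rcons (T : Type) (x : T) s y : zip (x :: rcons s y) (rcons s y) = rcons (zip (x :: s) s) (last x s, y).
Proof. by elim: s x => [|z s IH] x //=; rewrite IH. Qed.

Definition bnd (l : seq point) : nat := foldr (fun x acc => absz x.1 + absz x.2 + acc)%N 0%N l.

Lemma bnd_le l x : x \in l -> (absz x.1 + absz x.2 <= bnd l)%N.
Proof.
elim: l => [|y l IH] //=; rewrite in_cons => /orP[/eqP->|/IH h]; first exact: leq_addr.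
by rewrite (leq_trans h) // leq_addl.
Qed.

Lemma covered_box S l : covered S l -> forall v, S v -> inbox (Posz (bnd l)) v.
Proof.
move=> Hc v /Hc /bnd_le; rewrite /inbox; case: v => a b /=; lia.
Qed.

Lemma chi_above (q u w : point) : u.2 <= q.2 - 1 -> w.2 <= q.2 - 1 -> chi q u w = false.
Proof.
case: q u w => [a b] [c d] [e f] /= h1 h2.
by apply/negbTE; rewrite /chi /=; apply/negP => /orP[] /andP[/andP[/eqP g1 /eqP g2] g3]; lia.
Qed.

Lemma edgeP u w a b : edge u w a b = ((u == a) && (w == b)) || ((u == b) && (w == a)).
Proof.
case: u w a b => [u1 u2] [w1 w2] [a1 a2] [b1 b2].
by rewrite /edge /= !xpair_eqE !andbA.
Qed.

Lemma count_corr_pred (F : point -> point -> bool) (bad : point -> bool) x0 s :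
  (forall u w, F u w -> bad u || bad w) ->
  (forall z, z \in x0 :: s -> ~~ bad z) ->
  count (fun e => F e.1 e.2) (zip (x0 :: s) s) = 0%N.
Proof.
move=> HF Hb; apply/eqP; rewrite -leqn0 leqNgt -has_count; apply/hasP => -[e He /HF].
case/mem_zip2: He => h1 h2.
have h2' : e.2 \in x0 :: s by rewrite in_cons h2 orbT.
by case/orP => Hbad; [move: (Hb _ h1)|move: (Hb _ h2')]; rewrite Hbad.
Qed.

Lemma nbneqb v i : (v == nb v i) = false.
Proof. by apply/negbTE/eqP => E; apply: (@nb_neq v i); rewrite -E. Qed.

Lemma nbneqij v i j : (i %% 6 != j %% 6)%N -> (nb v i == nb v j) = false.
Proof. by move=> H; apply/negbTE/eqP => /nb_inj E; rewrite E eqxx in H. Qed.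

Lemma lexle_le2 (x v : point) : lexle x v -> x.2 <= v.2.
Proof. case: x v => [a b] [c d]; rewrite /lexle /=; lia. Qed.

Lemma JTR S l v : covered S l -> holefree S -> TRpt S v ->
  S (nb v 1) -> ~ S (nb v 2) -> S (nb v 3) -> ~ reach (Sm S v) (nb v 1) (nb v 3).
Proof.
move=> Hc Hf HT s1 ns2 s3 Hr.
have HM := covered_box Hc.
have [h0 h4 h5] := TR_out HT.
case: (reach_path Hr) => s [Hp Hl Hin].
set g := nb v 1 :: rcons s v.
have Hpg : path adjb v g.
  rewrite /g /= rcons_path Hp Hl /=; apply/andP; split; apply/adjP.
    by exists 1%N.
  by exists 0%N; crd.
have Hlg : last v g = v by rewrite /g /= last_rcons.
have Hing : forall z, z \in v :: g -> z = v \/ (z \in nb v 1 :: s).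
  move=> z; rewrite /g !in_cons mem_rcons in_cons.
  case/orP=> [/eqP->|/orP[/eqP->|/orP[/eqP->|H]]]; try by left.
    by right; rewrite eqxx.
  by right; rewrite H orbT.
have HS : forall z, z \in v :: g -> S z.
  by move=> z /Hing [->|/Hin []]; [exact: HT.1|].
have c5 : cr (nb v 5) v g = 0%N.
  apply/eqP; rewrite -leqn0 leqNgt -has_count; apply/hasP => -[e He].
  case/mem_zip2: He => /HS /HT.2 l1 /(fun h => HS _ (mem_behead h)) /HT.2 l2.
  by rewrite chi_above // nb5 /= addrK; apply: lexle_le2.
have cv : odd (cr v v g) = false.
  have := @cr_pair_closed v (nb v 5) (corr5 v) (Rrow v) v g Hpg Hlg (E5 v).
  rewrite c5 (@count_corr_pred _ (fun x => x == nb v 0)) //=.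
    by case: (odd _).
    move=> u w; rewrite /corr5 => /xorb_or /orP[] /edge_ends /andP[// _].
  by move=> z /HS Sz; apply/eqP => E; apply: h0; rewrite -E.
have E0 : nb (nb v 2) 0 = nb v 1 by crd.
have E5' : nb (nb v 2) 5 = v by crd.
have cnt : odd (count (fun e => corr5 (nb v 2) e.1 e.2) (zip (v :: g) g)) = true.
  rewrite /g /= zip_rcons -cats1 count_cat /= Hl.
  rewrite (@count_corr_pred _ (fun x => (x == nb v 2) || (x == v))) //; last first.
      move=> z /Hin [Sz nz]; apply/negP => /orP[/eqP E|/eqP E]; first by apply: ns2; rewrite -E.
      by apply: nz.
    move=> u w; rewrite /corr5 E0 E5' => /xorb_or /orP[] /edge_ends /andP[].
      by case/orP => -> _; rewrite ?orbT.
    by move=> _ /orP[] ->; rewrite ?orbT.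
  rewrite /corr5 E0 E5' !edgeP !eqxx !nbneqb /=.
  rewrite (@nbneqij v 3 1) // (@nbneqij v 3 2) //.
  by rewrite eq_sym nbneqb.
have := @cr_pair_closed (nb v 2) (nb (nb v 2) 5) (corr5 (nb v 2)) (Rrow (nb v 2)) v g Hpg Hlg (E5 _).
rewrite cnt E5' cv addbF => Hodd.
have := cr_outer Hpg Hlg HS HM (Hf _ ns2).
by rewrite Hodd.
Qed.

Lemma SCE_sub (S T : point -> Prop) w : (forall x, T x -> S x) -> holefree S ->
  (forall y, adj w y -> S y -> T y) -> SCE T w -> SCE S w.
Proof.
move=> TS Hf Hcl [[[Tw [i nTi]] Hred [_ [j Oj]]] [i' [k [[Hk Hnot Hmax] Hpos]]]].
have aw : forall n, adj w (nb w n) by move=> n; exists n.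
have Heq : forall n, S (nb w n) <-> T (nb w n).
  by move=> n; split; [apply: Hcl; apply: aw|apply: TS].
split; first split.
- split; first exact: TS.
  by exists i; move/Heq.
- apply: connected_ext Hred => z; split; case=> h1 h2; split=> //; first exact: TS.
  exact: Hcl.
- split; first exact: TS.
  exists j; apply: Hf => /Heq Tj; exact: (outer_notS Oj Tj).
- exists i', k; split=> //; split=> //.
    by move=> n /Hnot; rewrite Heq.
  by case: Hmax => [->|[h1 h2]]; [left|right; rewrite !Heq].
Qed.

Lemma size_filter_lt (l : seq point) x : x \in l -> (size (filter (fun y => y != x) l) < size l)%N.
Proof.
move=> Hx; rewrite size_filter -(count_predC (fun y => y != x) l) -addn1 leq_add2l.
by rewrite lt0n -lt0n -has_count; apply/hasP; exists x => //=; rewrite eqxx.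
Qed.

Definition IHtype (n : nat) : Prop := forall S l z, (size l < n)%N -> covered S l ->
  connected_pts S -> holefree S -> (exists x y, [/\ S x, S y & x <> y]) ->
  exists w, SCE S w /\ w <> z.

Lemma split_TR S l v z d d' : IHtype (size l) ->
  covered S l -> holefree S -> TRpt S v -> ~ S (nb v 2) -> v <> z ->
  S d -> adj v d -> S d' -> adj v d' ->
  ~ reach (Sm S v) d d' -> ~ reach (Sm S v) d z -> exists w, SCE S w /\ w <> z.
Proof.
move=> IH Hc Hf HT ns2 vz Sd avd Sd' avd' nd' nz.
have dv : d <> v by move=> E; apply: (@adj_irr v); rewrite -{2}E.
have d'v : d' <> v by move=> E; apply: (@adj_irr v); rewrite -{2}E.
set T := fun x => x = v \/ reach (Sm S v) d x.
have TS : forall x, T x -> S x by move=> x [->|/reach_A2 []]; [exact: HT.1|].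
have Tv : T v by left.
have Smd : Sm S v d by split.
have Td : T d by right; apply: reach_refl.
have reachTv : forall x, T x -> reach T x v.
  move=> x [->|Hx]; first exact: reach_refl.
  have h1 : reach T d x.
    by apply: reach_mono (reach_in Hx) => y [_ Hy]; right.
  apply: reach_trans (reach_sym h1) _.
  exact: reach_step Td (adj_sym avd) (reach_refl Tv).
have Hcov : covered T (filter (fun y => y != d') l).
  move=> x Tx; rewrite mem_filter (Hc _ (TS _ Tx)) andbT; apply/eqP => E.
  case: Tx; first by rewrite E.
  by rewrite E.
have Hsz : (size (filter (fun y => y != d') l) < size l)%N by apply/size_filter_lt/Hc.
have Hconn : connected_pts T.
  by move=> a b Ta Tb; apply: reach_trans (reachTv _ Ta) (reach_sym (reachTv _ Tb)).
have Hhf : holefree T.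
  move=> x nTx; case: (classic (S x)) => Sx; last first.
    by apply: outer_mono (Hf _ Sx) => y /TS.
  have xv : x <> v by move=> E; apply: nTx; left.
  have nrx : ~ reach (Sm S v) d x by move=> H; apply: nTx; right.
  have up : forall j, (forall j', (j' <= j)%N -> S (ray x 5 j')) ->
      [/\ ~ T (ray x 5 j), reach (fun z => ~ T z) x (ray x 5 j) & reach (Sm S v) x (ray x 5 j)].
    elim=> [|j IHj] Hj.
      by split=> //; apply: reach_refl => //; split.
    have [h1 h2 h3] := IHj (fun j' Hj' => Hj j' (leqW Hj')).
    have Sy' : S (ray x 5 j.+1) by apply: Hj.
    have Ey : ray x 5 j.+1 = nb (ray x 5 j) 5 by [].
    have y'v : ray x 5 j.+1 <> v.
      move=> E; apply: ns2.
      have -> : nb v 2 = ray x 5 j.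
        by rewrite -E Ey -(nb_mod _ 2) -[(2 %% 6)%N]/((5 + 3) %% 6)%N nb_mod nb_back.
      by apply: Hj; apply: leqW.
    have h3' : reach (Sm S v) x (ray x 5 j.+1).
      by apply: reach_snoc h3 _ _; [rewrite Ey; exists 5%N|split].
    have nT' : ~ T (ray x 5 j.+1).
      case=> // H; apply: nrx; exact: reach_trans H (reach_sym h3').
    split=> //; apply: reach_snoc h2 _ _ => //; rewrite Ey; by exists 5%N.
  set K := (absz (v.2 - x.2) + 1)%N.
  have nSK : ~ S (ray x 5 K).
    move=> /HT.2; rewrite ray5 /lexle /K /=; lia.
  suff : forall m j, (j + m = K)%N -> (forall j', (j' <= j)%N -> S (ray x 5 j')) -> outer T x.
    move=> H; apply: (H K 0%N) => // j'; rewrite leqn0 => /eqP ->; exact: Sx.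
  elim=> [|m IHm] j Hjm Hj.
    by rewrite addn0 in Hjm; case: nSK; rewrite -Hjm; apply: Hj.
  case: (classic (S (ray x 5 j.+1))) => Sj.
    apply: (IHm j.+1); first by rewrite addSnnS.
    by move=> j'; rewrite leq_eqVlt ltnS => /orP[/eqP->//|]; apply: Hj.
  have [h1 h2 h3] := up j Hj.
  have O : outer T (ray x 5 j.+1) by apply: outer_mono (Hf _ Sj) => y /TS.
  apply: outer_back O.
  by apply: reach_snoc h2 _ _; [exists 5%N|move/TS].
have [w [Hw wv]] := IH T _ v Hsz Hcov Hconn Hhf (ex_intro _ v (ex_intro _ d (And3 Tv Td (nesym dv)))).
have Tw : T w by case: Hw => [[[]]].
have rw : reach (Sm S v) d w by case: Tw.
exists w; split.
  apply: SCE_sub Hw => // y awy Sy.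
  case: (classic (y = v)) => [->|yv]; first by left.
  by right; apply: reach_snoc rw awy _; split.
by move=> E; apply: nz; rewrite -E.
Qed.

Lemma main_TR S l v z : IHtype (size l) ->
  covered S l -> holefree S -> TRpt S v -> v <> z -> exists w, SCE S w /\ w <> z.
Proof.
move=> IH Hc Hf HT vz.
case: (classic (S (nb v 1) /\ ~ S (nb v 2) /\ S (nb v 3))) => [[s1 [ns2 s3]]|Hbad].
  have J := JTR Hc Hf HT s1 ns2 s3.
  have a1 : adj v (nb v 1) by exists 1%N.
  have a3 : adj v (nb v 3) by exists 3%N.
  case: (classic (reach (Sm S v) (nb v 1) z)) => H1.
    apply: (@split_TR S l v z (nb v 3) (nb v 1) IH) => //.
      by move=> H; apply: J; apply: reach_sym.
    by move=> H; apply: J; apply: reach_trans H1 (reach_sym H).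
  exact: (@split_TR S l v z (nb v 1) (nb v 3) IH).
by exists v; split=> //; apply: SCE_TR.
Qed.

Definition negp (x : point) : point := (- x.1, - x.2).

Lemma negpK x : negp (negp x) = x.
Proof. by case: x => a b; rewrite /negp /= !opprK. Qed.

Lemma nb_negp x i : nb (negp x) i = negp (nb x (i + 3)).
Proof.
rewrite (nbE (negp x)) (nbE x (i + 3)) -modnDml.
case: (mod6_cases i) => [->|[->|[->|[->|[->|->]]]]] /=; case: x => a b; rewrite /negp /=;
  congr pair; lia.
Qed.

Lemma negp_nb x i : negp (nb x i) = nb (negp x) (i + 3).
Proof.
rewrite nb_negp -addnA (_ : (3 + 3 = 6)%N) //; congr negp.
by rewrite -(nb_mod x (i + 6)) modnDr nb_mod.
Qed.

Lemma adj_negp x y : adj x y -> adj (negp x) (negp y).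
Proof. by case=> i ->; exists (i + 3)%N; rewrite negp_nb. Qed.

Lemma reach_negp A x y : reach A x y -> reach (fun z => A (negp z)) (negp x) (negp y).
Proof.
elim=> [x0 Ax|x1 y1 z1 Ax Axy _ IH]; first by apply: reach_refl; rewrite negpK.
by apply: reach_step IH; [rewrite negpK|apply: adj_negp].
Qed.

Lemma pnorm_negp x : pnorm (negp x) = pnorm x.
Proof. by case: x => a b; rewrite /pnorm /negp /= !abszN. Qed.

Lemma outer_negp S x : outer S x -> outer (fun z => S (negp z)) (negp x).
Proof.
move=> O N; case: (O N) => r [Hr HN]; exists (negp r); split; last by rewrite pnorm_negp.
exact: (@reach_negp (fun z => ~ S z) x r Hr).
Qed.

Lemma SCE_negp S w : SCE (fun z => S (negp z)) w -> SCE S (negp w).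
Proof.
move=> [[[Tw [i nTi]] Hred [_ [j Oj]]] [i' [k [[Hk Hnot Hmax] Hpos]]]].
have E : forall n, S (negp (nb w n)) <-> S (nb (negp w) (n + 3)).
  by move=> n; rewrite negp_nb.
split; first split.
- split=> //; exists (i + 3)%N; by rewrite -negp_nb.
- move=> a b [Sa Ha] [Sb Hb].
  have Ha' : adj w (negp a) by rewrite -(negpK w); apply: adj_negp.
  have Hb' : adj w (negp b) by rewrite -(negpK w); apply: adj_negp.
  have := reach_negp (Hred _ _ (conj (_ : S (negp (negp a))) Ha') (conj (_ : S (negp (negp b))) Hb')).
  rewrite !negpK => /(_ Sa Sb) H.
  apply: reach_mono H => y [h1 h2]; split; first by rewrite negpK in h1.
  by rewrite -(negpK y); apply: adj_negp.
- split=> //; exists (j + 3)%N; rewrite -negp_nb.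
  have := outer_negp Oj; apply: outer_mono => y; by rewrite negpK.
- have E3 : forall n, (i' + 3 + n = (i' + n) + 3)%N by move=> n; rewrite addnAC.
  exists (i' + 3)%N, k; split=> //; split=> //.
    by move=> n /Hnot; rewrite E3 -negp_nb.
  case: Hmax => [->|[h1 h2]]; first by left.
  by right; rewrite !E3 -!negp_nb.
Qed.

Lemma exists_SCE_gen n : forall S l z, (size l <= n)%N -> covered S l ->
  connected_pts S -> holefree S -> (exists x y, [/\ S x, S y & x <> y]) ->
  exists w, SCE S w /\ w <> z.
Proof.
elim: n => [|n IHn] S l z Hn Hc Hconn Hf [x [y [Sx Sy xy]]].
  by move: (Hc _ Sx); case: l Hn Hc.
have IH : IHtype (size l).
  by move=> S' l' z' Hl'; apply: IHn; rewrite -ltnS (leq_trans Hl').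
case: (TR_exists Hc Sx) => v HT.
case: (classic (v = z)) => [vz|vz]; last exact: main_TR IH Hc Hf HT vz.
set S' := fun x => S (negp x).
have Hc' : covered S' (map negp l).
  by move=> u /Hc Hu; rewrite -(negpK u); apply: map_f.
have Hf' : holefree S'.
  move=> u nu; have := outer_negp (Hf _ nu).
  by rewrite negpK; apply.
case: (TR_exists Hc' (_ : S' (negp x))) => [|v' HT']; first by rewrite /S' negpK.
case: (classic (v' = negp z)) => [vz'|vz'].
  exfalso; apply: xy.
  have key : forall u, S u -> u = z.
    move=> u Su; have h1 := HT.2 _ Su.
    have Su' : S' (negp u) by rewrite /S' negpK.
    have h2 := HT'.2 _ Su'.
    rewrite vz' -vz in h2; rewrite -vz.
    move: h1 h2; rewrite /lexle /negp; case: u {Su Su'} => a b; case: (v) => c d /=.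
    move=> h1 h2; apply: pointP => /=; lia.
  by rewrite (key _ Sx) (key _ Sy).
have IH' : IHtype (size (map negp l)) by rewrite size_map.
have [w [Hw wz]] := main_TR IH' Hc' Hf' HT' vz'.
exists (negp w); split; first exact: SCE_negp.
by move=> E; apply: wz; rewrite -E negpK.
Qed.

Lemma exists_SCE S l : covered S l -> connected_pts S -> holefree S ->
  (exists x y, [/\ S x, S y & x <> y]) -> exists w, SCE S w.
Proof.
move=> Hc Hconn Hf H2.
have [w [Hw _]] := @exists_SCE_gen (size l) S l (0, 0) (leqnn _) Hc Hconn Hf H2.
by exists w.
Qed.

Definition boxl (M : nat) : seq point :=
  [seq (Posz a - Posz M, Posz b - Posz M) | a <- iota 0 (M.*2.+1), b <- iota 0 (M.*2.+1)].

Lemma in_boxl M x : inbox (Posz M) x -> x \in boxl M.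
Proof.
case: x => a b; rewrite /inbox /= => -[h1 [h2 [h3 h4]]].
have -> : (a, b) = (Posz (absz (a + Posz M)) - Posz M, Posz (absz (b + Posz M)) - Posz M).
  by apply: pointP => /=; lia.
by apply: allpairs_f; rewrite mem_iota; apply/andP; split=> //; lia.
Qed.

Lemma ex_min_nat (Q : nat -> Prop) k : Q k -> exists m, Q m /\ forall j, (j < m)%N -> ~ Q j.
Proof.
suff : forall n k, (k <= n)%N -> Q k -> exists m, Q m /\ forall j, (j < m)%N -> ~ Q j.
  by move=> H; apply: (H k).
elim=> [|n IH] {}k Hk Qk.
  by exists k; split=> // j Hj; move: (leq_trans Hj Hk).
case: (classic (exists j, (j < k)%N /\ Q j)) => [[j [Hj Qj]]|H].
  by apply: (IH j) => //; rewrite -ltnS (leq_trans Hj Hk).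
by exists k; split=> // j Hj Qj; apply: H; exists j.
Qed.

Section Area.
Variable P : finType.
Variable pos : P -> point.
Local Notation S := (shape_of pos).

Definition Ms : nat := bnd [seq pos p | p <- enum P].

Lemma shape_cov : covered S [seq pos p | p <- enum P].
Proof. by move=> x [p <-]; apply: map_f; rewrite mem_enum. Qed.

Lemma shape_box x : S x -> inbox (Posz Ms) x.
Proof. exact: (@covered_box _ _ shape_cov x). Qed.

Lemma shape_area x : S x -> area S x.
Proof. by move=> Sx O; apply: (outer_notS O). Qed.

Lemma area_box x : area S x -> inbox (Posz Ms) x.
Proof.
move=> Ax; apply: NNPP => nb; apply: Ax.
have nS : forall y, ~ inbox (Posz Ms) y -> ~ S y by move=> y h /shape_box.
case: x nb => a b; rewrite /inbox /= => nb.
have [h|[h|[h|h]]] : Ms%:Z < b \/ b < - Ms%:Z \/ Ms%:Z < a \/ a < - Ms%:Z by lia.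
- apply: (@outer_ray _ _ 5%N); first by right; right; right.
  by move=> k; apply: nS; rewrite ray5 /inbox /=; lia.
- apply: (@outer_ray _ _ 2%N); first by right; left.
  by move=> k; apply: nS; rewrite ray2 /inbox /=; lia.
- apply: (@outer_ray _ _ 0%N); first by left.
  by move=> k; apply: nS; rewrite ray0 /inbox /=; lia.
- apply: (@outer_ray _ _ 3%N); first by right; right; left.
  by move=> k; apply: nS; rewrite ray3 /inbox /=; lia.
Qed.

Lemma area_cov : covered (area S) (boxl Ms).
Proof. by move=> x /area_box; apply: in_boxl. Qed.

Lemma area_interior x : area S x -> ~ S x -> forall i, area S (nb x i).
Proof.
move=> Ax nSx i O; apply: Ax; apply: (outer_adj (y := nb x i)) => //.
by exists i.
Qed.

Lemma area_to_shape x : area S x -> exists y, S y /\ reach (area S) x y.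
Proof.
move=> Ax.
case: (classic (exists k, S (ray x 5 k))) => [[k Hk]|H]; last first.
  exfalso; apply: Ax; apply: (@outer_ray _ _ 5%N); first by right; right; right.
  by move=> k Sk; apply: H; exists k.
case: (@ex_min_nat (fun k => S (ray x 5 k)) k Hk) => m [Sm Hm].
exists (ray x 5 m); split=> //; apply: reach_ray => j; rewrite leq_eqVlt => /orP[/eqP->|Hj].
  exact: shape_area.
move=> O; apply: Ax; apply: outer_back O.
by apply: reach_ray => j' Hj'; apply: Hm; rewrite (leq_ltn_trans Hj').
Qed.

Lemma area_conn : connected_pts S -> connected_pts (area S).
Proof.
move=> Hc a b Aa Ab.
case: (area_to_shape Aa) => ya [Sya Ha].
case: (area_to_shape Ab) => yb [Syb Hb].
apply: reach_trans Ha _; apply: reach_trans _ (reach_sym Hb).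
by apply: reach_mono (Hc _ _ Sya Syb) => z /shape_area.
Qed.

Lemma area_hf : holefree (area S).
Proof.
move=> x nAx; have O : outer S x by apply: NNPP.
move=> N; case: (O N) => r [Hr HN]; exists r; split=> //.
apply: reach_mono (reach_in Hr) => z [nSz Hz] Az; apply: Az.
exact: outer_back (reach_sym Hz) O.
Qed.

End Area.

Lemma remove_conn (S : point -> Prop) v : connected_pts S -> redundant S v ->
  connected_pts (Sm S v).
Proof.
move=> Hc Hr.
suff key : forall a b, reach S a b -> b <> v ->
  (a <> v -> reach (Sm S v) a b) /\
  (a = v -> forall a', S a' -> adj v a' -> reach (Sm S v) a' b).
  by move=> a b [Sa av] [Sb bv]; apply: (key a b (Hc _ _ Sa Sb) bv).1.
move=> a b; elim=> [x Sx|x y z Sx Axy Hyz IH] bv.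
  by split=> // xv; apply: reach_refl.
have [IH1 IH2] := IH bv.
have Sy := reach_A1 Hyz.
split.
  move=> xv; case: (classic (y = v)) => [yv|yv].
    by apply: (IH2 yv x Sx); rewrite -yv; apply: adj_sym.
  by apply: (reach_step _ Axy (IH1 yv)); split.
move=> xv a' Sa' Ha'.
case: (classic (y = v)) => [yv|yv].
  by case: (@adj_irr v); rewrite -{2}yv -{1}xv.
apply: reach_trans (IH1 yv).
have avy : adj v y by rewrite -xv.
have := Hr a' y (conj Sa' Ha') (conj Sy avy).
apply: reach_mono => t [St Ht]; split=> // tv.
by apply: (@adj_irr v); rewrite -{2}tv.
Qed.

Lemma hf_remove (S : point -> Prop) v i : holefree S -> outer S (nb v i) ->
  holefree (Sm S v).
Proof.
move=> Hf O x nx.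
case: (classic (x = v)) => [->|xv].
  apply: (outer_adj (y := nb v i)); first by exists i.
    by case.
  by apply: outer_mono O => z [].
have nSx : ~ S x by move=> Sx; apply: nx.
by apply: outer_mono (Hf _ nSx) => z [].
Qed.

Ltac contra_hyp :=
  match goal with H : ~ ?P, H' : ?P |- _ => exact: (False_ind _ (H H')) end.

Lemma nb_c1 v a : nb (nb v a) (a + 2) = nb v (a + 1).
Proof.
rewrite (nbE (nb v a)) (nbE v a) (nbE v (a + 1)) -modnDml -(modnDml a 1).
by case: (mod6_cases a) => [->|[->|[->|[->|[->|->]]]]] /=; case: v => x y /=;
   apply: pointP => /=; lia.
Qed.

Lemma nb_c5 v a : nb (nb v a) (a + 4) = nb v (a + 5).
Proof.
rewrite (nbE (nb v a)) (nbE v a) (nbE v (a + 5)) -modnDml -(modnDml a 5).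
by case: (mod6_cases a) => [->|[->|[->|[->|[->|->]]]]] /=; case: v => x y /=;
   apply: pointP => /=; lia.
Qed.

Definition comb_ok (i a1 a2 : nat) : bool :=
  (a1 == a2) || has (fun j => let x := ((i + j) %% 6)%N in
     [|| x == a1, x == ((a1 + 1) %% 6)%N, x == ((a1 + 5) %% 6)%N,
         x == a2, x == ((a2 + 1) %% 6)%N | x == ((a2 + 5) %% 6)%N]) (iota 0 3).

Lemma comb_all : all (fun i => all (fun a1 => all (fun a2 => comb_ok i a1 a2) (iota 0 6)) (iota 0 6)) (iota 0 6).
Proof. exact: isT. Qed.

Lemma comb (i a1 a2 : nat) : (i < 6)%N -> (a1 < 6)%N -> (a2 < 6)%N -> comb_ok i a1 a2.
Proof.
move=> hi h1 h2; have := comb_all.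
move/allP/(_ i); rewrite mem_iota hi => /(_ isT).
move/allP/(_ a1); rewrite mem_iota h1 => /(_ isT).
by move/allP/(_ a2); rewrite mem_iota h2 => /(_ isT).
Qed.

Lemma one_interior (S : point -> Prop) v a1 a2 : SCE S v ->
  S (nb v a1) -> (forall j, S (nb (nb v a1) j)) ->
  S (nb v a2) -> (forall j, S (nb (nb v a2) j)) -> nb v a1 = nb v a2.
Proof.
move=> [_ [i [k [[Hk Hnot _] Hpos]]]] s1 I1 s2 I2.
have k3 : (2 < k)%N by move: Hpos; lia.
have e : forall x c, nb v (x + c) = nb v ((x %% 6 + c) %% 6) by move=> x c; rewrite modnDml nb_mod.
have nj : forall j, (j < 3)%N -> ~ S (nb v ((i %% 6 + j) %% 6)).
  by move=> j hj; rewrite -e; apply: Hnot; rewrite (leq_trans hj k3).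
have s1p := I1 (a1 + 2)%N; rewrite nb_c1 e in s1p.
have s1m := I1 (a1 + 4)%N; rewrite nb_c5 e in s1m.
have s2p := I2 (a2 + 2)%N; rewrite nb_c1 e in s2p.
have s2m := I2 (a2 + 4)%N; rewrite nb_c5 e in s2m.
rewrite -(nb_mod v a1) in s1 *; rewrite -(nb_mod v a2) in s2 *.
have := comb (ltn_mod i 6) (ltn_mod a1 6) (ltn_mod a2 6).
case/orP => [/eqP->//|/hasP [j]]; rewrite mem_iota add0n => /andP[_ hj].
have nS := nj j hj.
by case/or4P => [/eqP E|/eqP E|/eqP E|/or3P [/eqP E|/eqP E|/eqP E]]; rewrite E in nS.
Qed.

Section Model.
Variable P : finType.
Variable pos : P -> point.
Local Notation Sh := (shape_of pos).

Record Inv (C : config P) : Prop := mkInv {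
  i_sub : forall x, cSe C x -> area Sh x;
  i_conn : connected_pts (cSe C);
  i_hf : holefree (cSe C);
  i_head : forall p, cstatus C p <> Follower -> cSe C (chead C p);
  i_tail : forall p, ctail C p <> chead C p -> ~ cSe C (ctail C p) /\ cstatus C p = Undecided;
  i_disj : forall p q x, p <> q -> occ C p x -> occ C q x -> False;
  i_free : forall x, cSe C x -> (exists p, chead C p = x /\ cstatus C p <> Follower) \/
                                 (~ occupied C x /\ forall i, cSe C (nb x i));
  i_elig : forall p, cstatus C p = Undecided -> forall i : 'I_6, celig C p i <-> cSe C (nb (chead C p) i);
  i_lead : forall p, cstatus C p = Leader -> forall q, q <> p -> cstatus C q = Follower;
  i_fin : forall p, cfinal C p -> cstatus C p <> Undecided;
  i_ne : exists x, cSe C x }.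

Lemma reach_inv (A : point -> Prop) a b : reach A a b ->
  b = a \/ exists y, adj a y /\ A y /\ reach A y b.
Proof. case=> [//|x y z _ Hxy Hyz]; first by left. by right; exists y; split=> //; split=> //; exact: reach_A1 Hyz. Qed.

Lemma upd_same T (f : P -> T) x y : upd f x y x = y.
Proof. by rewrite /upd eqxx. Qed.

Lemma upd_other T (f : P -> T) x y z : z <> x -> upd f x y z = f z.
Proof. by move=> /eqP H; rewrite /upd (negbTE H). Qed.

Lemma ord6 (i : nat) : exists j : 'I_6, nb^~ i =1 nb^~ j.
Proof. by exists (Ordinal (ltn_mod i 6)) => v /=; rewrite nb_mod. Qed.

Lemma init_inv : permitted pos -> Inv (init_config pos).
Proof.
case=> HP Hinj Hconn; constructor=> //=.
- exact: area_conn.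
- exact: area_hf.
- by move=> p _; apply: shape_area; exists p.
- by move=> p q x pq [<-|<-] [E|E]; apply: pq; apply: Hinj.
- move=> x Ax; case: (classic (Sh x)) => [[p <-]|nS].
    by left; exists p.
  right; split; last exact: area_interior.
  by case=> q [E|E]; apply: nS; exists q.
- case/card_gt0P: HP => p _; exists (pos p); apply: shape_area; by exists p.
Qed.


Lemma inv_contract (C : config P) p : Inv C -> chead C p <> ctail C p ->
  Inv (Config (upd (ctail C) p (chead C p)) (chead C) (cstatus C) (celig C) (cfinal C) (cSe C)).
Proof.
case=> Hsub Hconn Hhf Hhead Htail Hdisj Hfree Helig Hlead Hfin Hne Hexp.
have occ' : forall q x, occ (Config (upd (ctail C) p (chead C p)) (chead C) (cstatus C) (celig C) (cfinal C) (cSe C)) q x -> occ C q x.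
  move=> q x; rewrite /occ /=; case: (classic (q = p)) => [->|qp].
    by rewrite upd_same => -[]; left.
  by rewrite upd_other.
constructor=> //=.
- move=> q; case: (classic (q = p)) => [->|qp]; first by rewrite upd_same.
  by rewrite upd_other //; apply: Htail.
- by move=> q r x qr /occ' h1 /occ' h2; apply: Hdisj h1 h2.
- move=> x /Hfree [H|[no H]]; [left|right] => //; split=> //.
  by move=> [q /occ' h]; apply: no; exists q.
Qed.

Lemma inv_term (C : config P) p : Inv C -> cstatus C p <> Undecided ->
  Inv (Config (ctail C) (chead C) (cstatus C) (celig C) (upd (cfinal C) p true) (cSe C)).
Proof.
case=> Hsub Hconn Hhf Hhead Htail Hdisj Hfree Helig Hlead Hfin Hne Hst.
constructor=> //= q.
case: (classic (q = p)) => [->//|qp]; rewrite upd_other //; exact: Hfin.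
Qed.

Lemma Se_single (C : config P) v : Inv C -> cSe C v -> (forall i, ~ cSe C (nb v i)) -> forall x, cSe C x -> x = v.
Proof.
move=> I Sv Hn x Sx; case: (reach_inv (i_conn I Sv Sx)) => [->//|[y [[i Ey] [Sy _]]]].
by case: (Hn i); rewrite -Ey.
Qed.

Lemma inv_leader (C : config P) p : Inv C -> cstatus C p = Undecided -> ctail C p = chead C p ->
  (forall i, ~ celig C p i) ->
  Inv (Config (ctail C) (chead C) (upd (cstatus C) p Leader) (celig C) (cfinal C) (cSe C)).
Proof.
move=> I; case: (I) => Hsub Hconn Hhf Hhead Htail Hdisj Hfree Helig Hlead Hfin Hne Hu Hc Hnf.
have Sv : cSe C (chead C p) by apply: Hhead; rewrite Hu.
have Hn : forall i, ~ cSe C (nb (chead C p) i).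
  move=> i; case: (ord6 i) => j ->; move/(Helig p Hu j); exact: Hnf.
have single := Se_single I Sv Hn.
have others : forall q, q <> p -> cstatus C q = Follower.
  move=> q qp; case E: (cstatus C q) => //; exfalso;
  (have Sq : cSe C (chead C q) by apply: Hhead; rewrite E);
  (apply: (Hdisj q p (chead C q) qp); [by left|by left; rewrite (single _ Sq)]).
constructor=> //=.
- move=> q; case: (classic (q = p)) => [->|qp]; first by rewrite upd_same.
  by rewrite upd_other //; apply: Hhead.
- move=> q; case: (classic (q = p)) => [->|qp]; first by rewrite Hc.
  by rewrite upd_other //; apply: Htail.
- move=> x /Hfree [[q [Hq Hs]]|H]; [left|by right].
  exists q; split=> //; case: (classic (q = p)) => [->|qp]; first by rewrite upd_same.
  by rewrite upd_other.
- move=> q; case: (classic (q = p)) => [->|qp]; first by rewrite upd_same.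
  by rewrite upd_other //; apply: Helig.
- move=> q; case: (classic (q = p)) => [->|qp].
    by move=> _ r rp; rewrite upd_other //; apply: others.
  rewrite upd_other // => /Hlead H; exfalso; have := H p (nesym qp); by rewrite Hu.
- move=> q; case: (classic (q = p)) => [->|qp]; first by rewrite upd_same.
  by rewrite upd_other //; apply: Hfin.
Qed.

Lemma nb_eq_back x j v : nb x j = v -> x = nb v (j + 3).
Proof. by move=> <-; rewrite nb_back. Qed.

Lemma interior_of (C : config P) x : Inv C -> cSe C x -> ~ occupied C x -> forall i, cSe C (nb x i).
Proof.
move=> I Sx no; case: (i_free I Sx) => [[q [Hq _]]|[]] //.
by case: no; exists q; left.
Qed.

Lemma head_neq (C : config P) p q : Inv C -> q <> p -> chead C q <> chead C p.
Proof. by move=> I qp E; apply: (i_disj I qp (x := chead C q)); [left|left; rewrite E]. Qed.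

Lemma inv_erode_move (C : config P) p (i : 'I_6) :
  Inv C -> cstatus C p = Undecided -> ctail C p = chead C p -> SCE (cSe C) (chead C p) ->
  let v := chead C p in
  let Se' := fun x => cSe C x /\ x <> v in
  let E' := fun q (i : 'I_6) => celig C q i /\ nb (chead C q) i <> v in
  let u := nb v i in
  Se' u -> ~ occupied C u ->
  Inv (Config (ctail C) (upd (chead C) p u) (cstatus C)
                  (upd E' p (fun j : 'I_6 => (j : nat) <> ((i + 3) %% 6)%N))
                  (cfinal C) Se').
Proof.
move=> I Hu Hc HS v Se' E' u [Su uv] nou.
case: (I) => Hsub Hconn Hhf Hhead Htail Hdisj Hfree Helig Hlead Hfin Hne.
have intu := interior_of I Su nou.
have occ' : forall q x, occ (Config (ctail C) (upd (chead C) p u) (cstatus C)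
                  (upd E' p (fun j : 'I_6 => (j : nat) <> ((i + 3) %% 6)%N))
                  (cfinal C) Se') q x ->
    (q = p /\ (x = u \/ x = v)) \/ (q <> p /\ occ C q x).
  move=> q x; rewrite /occ /=; case: (classic (q = p)) => [->|qp].
    by rewrite upd_same Hc => H; left; split=> //; case: H => <-; [left|right].
  by rewrite upd_other // => H; right.
have Hv : cSe C v by apply: Hhead; rewrite Hu.
have [[Hbp Hred Hob] _] := HS.
constructor=> //=.
- by move=> x [/Hsub].
- exact: (remove_conn Hconn Hred).
- by case: Hob => _ [j Oj]; apply: hf_remove Oj.
- move=> q; case: (classic (q = p)) => [->|qp]; first by rewrite upd_same.
  rewrite upd_other // => /Hhead Sq; split=> //; exact: head_neq.
- move=> q; case: (classic (q = p)) => [->|qp].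
    by rewrite upd_same Hc => _; split; [case|].
  by rewrite upd_other // => /Htail [h1 h2]; split=> // -[].
- move=> q r x qr Hq Hr.
  case: (occ' _ _ Hq) => [[Eq Ex]|[qp Hq']]; case: (occ' _ _ Hr) => [[Er Ex']|[rp Hr']].
  + by apply: qr; rewrite Eq Er.
  + case: Ex => Ex; rewrite Ex in Hr'; first by apply: nou; exists r.
    by apply: (Hdisj p r v (nesym rp)) => //; left.
  + case: Ex' => Ex'; rewrite Ex' in Hq'; first by apply: nou; exists q.
    by apply: (Hdisj q p v qp) => //; left.
  + exact: Hdisj qr Hq' Hr'.
- move=> x [Sx xv]; case: (Hfree _ Sx) => [[q [Hq Hs]]|[nox intx]].
    left; exists q; split=> //; rewrite upd_other //.
    by move=> qp; apply: xv; rewrite -Hq qp.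
  case: (classic (x = u)) => [->|xu].
    by left; exists p; rewrite upd_same Hu.
  right; split.
    case=> q /occ' [[_ [E|E]]|[_ Hq]] //; by apply: nox; exists q.
  move=> j; split; first exact: intx.
  move=> /nb_eq_back E; apply: xu.
  rewrite E; apply: (one_interior HS); first by rewrite -E.
  - by move=> j'; rewrite -E; apply: intx.
  - exact: Su.
  - exact: intu.
- move=> q Hq j; case: (classic (q = p)) => [Eq|qp].
    subst q; rewrite !upd_same; split.
      move=> hj; split; first exact: intu.
      move=> E; apply: hj; have := nb_inj (etrans E (esym (nb_back v i))).
      by rewrite (modn_small (ltn_ord j)).
    case=> _ hne hj; apply: hne; rewrite hj nb_mod; exact: nb_back.
  rewrite !upd_other //; rewrite /E' (Helig q Hq j); split; case=> h1 h2; split=> //.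
- by exists u.
Qed.

Lemma inv_erode_follow (C : config P) p :
  Inv C -> cstatus C p = Undecided -> ctail C p = chead C p -> SCE (cSe C) (chead C p) ->
  (exists i, celig C p i) ->
  let v := chead C p in
  let Se' := fun x => cSe C x /\ x <> v in
  let E' := fun q (i : 'I_6) => celig C q i /\ nb (chead C q) i <> v in
  (forall i : 'I_6, ~ (Se' (nb v i) /\ ~ occupied C (nb v i))) ->
  Inv (Config (ctail C) (chead C) (upd (cstatus C) p Follower) E' (cfinal C) Se').
Proof.
move=> I Hu Hc HS [i0 Hi0] v Se' E' Hno.
case: (I) => Hsub Hconn Hhf Hhead Htail Hdisj Hfree Helig Hlead Hfin Hne.
have Hv : cSe C v by apply: Hhead; rewrite Hu.
have [[Hbp Hred Hob] _] := HS.
constructor=> //=.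
- by move=> x [/Hsub].
- exact: (remove_conn Hconn Hred).
- by case: Hob => _ [j Oj]; apply: hf_remove Oj.
- move=> q; case: (classic (q = p)) => [->|qp]; first by rewrite upd_same.
  rewrite upd_other // => /Hhead Sq; split=> //; exact: head_neq.
- move=> q; case: (classic (q = p)) => [->|qp]; first by rewrite Hc.
  by rewrite upd_other // => /Htail [h1 h2]; split=> // -[].
- move=> x [Sx xv]; case: (Hfree _ Sx) => [[q [Hq Hs]]|[nox intx]].
    left; exists q; split=> //; rewrite upd_other //.
    by move=> qp; apply: xv; rewrite -Hq qp.
  right; split=> // j; split; first exact: intx.
  move=> /nb_eq_back E; case: (ord6 (j + 3)) => k Ek.
  by apply: (Hno k); rewrite -Ek -E.
- move=> q Hq j; case: (classic (q = p)) => [Eq|qp].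
    by subst q; rewrite upd_same in Hq.
  rewrite upd_other // in Hq; rewrite /E' (Helig q Hq j); split; case=> h1 h2; split=> //.
- move=> q; case: (classic (q = p)) => [->|qp]; first by rewrite upd_same.
  rewrite upd_other // => /Hlead H; exfalso; have := H p (nesym qp); by rewrite Hu.
- move=> q; case: (classic (q = p)) => [->|qp]; first by rewrite upd_same.
  by rewrite upd_other //; apply: Hfin.
- exists (nb v i0); split; first by apply/(Helig p Hu i0).
  exact: nb_neq.
Qed.

End Model.

Local Close Scope ring_scope.

Section Steps.
Variable P : finType.
Variable pos : P -> point.
Local Notation Sh := (shape_of pos).
Local Notation Inv := (@Inv P pos).

Ltac dcase Hs :=
  case: Hs => [[Hf ->]|[[Hnf [Hne ->]]|[Hnf [Heq [[Ht ->]|[[Hnt [Hu [[Hall ->]|[[Hex [HS Her]]|[Hex [HnS ->]]]]]]|[Hnt [Hnu ->]]]]]]]].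

Lemma step_inv (C C' : config P) p : Inv C -> dle_step C p C' -> Inv C'.
Proof.
move=> I Hs; dcase Hs => //.
- exact: inv_contract.
- by apply: inv_term => //; case: Ht.
- exact: inv_leader.
- case: Her => [[i [h1 h2 ->]]|[h ->]].
    exact: inv_erode_move.
  exact: inv_erode_follow.
Qed.

Lemma step_Se_sub (C C' : config P) p x : dle_step C p C' -> cSe C' x -> cSe C x.
Proof.
move=> Hs; dcase Hs => //.
by case: Her => [[i [h1 h2 ->]]|[h ->]] /= [].
Qed.

Lemma step_others (C C' : config P) p q : dle_step C p C' -> q <> p ->
  [/\ chead C' q = chead C q, ctail C' q = ctail C q, cstatus C' q = cstatus C q
    & cfinal C' q = cfinal C q].
Proof.
move=> Hs qp; dcase Hs => /=; rewrite ?upd_other //.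
by case: Her => [[i [h1 h2 ->]]|[h ->]] /=; rewrite ?upd_other.
Qed.

Lemma step_frozen (C C' : config P) p : Inv C -> dle_step C p C' ->
  (forall x, cSe C' x <-> cSe C x) -> (forall q, cstatus C' q <> Leader) ->
  forall q, cstatus C' q = cstatus C q /\ chead C' q = chead C q.
Proof.
move=> I Hs Hx Hl q; case: (classic (q = p)) => [->|qp]; last first.
  by case: (step_others Hs qp).
have Hs' := Hs; move: Hx Hl; dcase Hs' => //= Hx Hl.
- by exfalso; apply: (Hl p); rewrite /= upd_same.
- exfalso; have Sv : cSe C (chead C p) by apply: (i_head I); rewrite Hu.
  move/Hx: Sv; case: Her => [[i [h1 h2 ->]]|[h ->]] /= [_ H]; by apply: H.
Qed.

Lemma step_contracted (C C' : config P) p q : dle_step C p C' ->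
  ctail C q = chead C q -> chead C' q = chead C q -> ctail C' q = chead C' q.
Proof.
move=> Hs Hc Hh; case: (classic (q = p)) => [Eq|qp]; last first.
  by case: (step_others Hs qp) => h1 h2 _ _; rewrite h1 h2.
subst q; move: Hh; dcase Hs => //=; try by rewrite upd_same.
case: Her => [[i [h1 h2 ->]]|[h ->]] //=.
by rewrite upd_same => E; exfalso; case: h1 => _ H; apply: H.
Qed.

Lemma step_decided (C C' : config P) p : (forall q, cstatus C q <> Undecided) ->
  dle_step C p C' -> forall q, cstatus C' q = cstatus C q.
Proof.
move=> Hd Hs q; case: (classic (q = p)) => [Eq|qp]; last by case: (step_others Hs qp).
subst q; dcase Hs => //; by case: (Hd p).
Qed.

Lemma step_final (C C' : config P) p : Inv C -> ~~ cfinal C p ->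
  (forall q, cstatus C q <> Undecided) -> dle_step C p C' -> cfinal C' p.
Proof.
move=> I Hnf0 Hd Hs.
have Hc : ctail C p = chead C p.
  by apply: NNPP => H; case: ((i_tail I) p H) => _; apply: Hd.
have Ht0 : term_cond C p by split; [apply: Hd|move=> q _; apply: Hd].
dcase Hs => //=; first [by rewrite upd_same | by case: Hnt | by rewrite Hf in Hnf0 | by case: Hne].
Qed.

Lemma step_expanded (C C' : config P) p : Inv C -> ctail C p <> chead C p ->
  dle_step C p C' -> ctail C' p = chead C' p /\ chead C' p = chead C p.
Proof.
move=> I Hexp Hs.
have Hu0 : cstatus C p = Undecided by case: ((i_tail I) p Hexp).
dcase Hs => //=; first [by rewrite upd_same | by case: (i_fin I Hf) | by case: Hexp].
Qed.

Lemma step_active_leader (C C' : config P) p : Inv C -> cstatus C p = Undecided ->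
  ctail C p = chead C p -> (forall i, ~ cSe C (nb (chead C p) i)) ->
  dle_step C p C' -> cstatus C' p = Leader.
Proof.
move=> I Hu0 Hc Hn Hs.
have Hnf' : forall i : 'I_6, ~ celig C p i by move=> i /(i_elig I Hu0); apply: Hn.
dcase Hs => //=; first [by rewrite upd_same | by case: (i_fin I Hf) | by case: Hne
  | by case: Ht | by case: Hex => i /Hnf' | by case: Hnu].
Qed.

Lemma step_active_erode (C C' : config P) p : Inv C -> cstatus C p = Undecided ->
  ctail C p = chead C p -> SCE (cSe C) (chead C p) -> (exists i, cSe C (nb (chead C p) i)) ->
  dle_step C p C' -> ~ cSe C' (chead C p).
Proof.
move=> I Hu0 Hc HS0 [i0 Hi0] Hs.
have Hfl : exists j : 'I_6, celig C p j.
  by case: (ord6 i0) => j Ej; exists j; apply/(i_elig I Hu0 j); rewrite -Ej.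
dcase Hs => //=; first [by case: (i_fin I Hf) | by case: Hne | by case: Ht
  | by case: Hfl => j /Hall | by case: HnS | by case: Hnu
  | by case: Her => [[i [h1 h2 ->]]|[h ->]] /= [_ H]; apply: H].
Qed.

End Steps.

Definition decb (Q : Prop) : bool := if excluded_middle_informative Q then true else false.
Lemma decbP (Q : Prop) : decb Q <-> Q.
Proof. by rewrite /decb; case: excluded_middle_informative. Qed.

Lemma count_lt (T : eqType) (a1 a2 : pred T) s x : subpred a1 a2 -> x \in s -> a2 x -> ~~ a1 x ->
  (count a1 s < count a2 s)%N.
Proof.
move=> Hs; elim: s => [//|y s IH]; rewrite in_cons => /orP[/eqP->|Hx] H2 H1 /=.
  by rewrite H2 (negbTE H1) add1n add0n ltnS sub_count.
have h := IH Hx H2 H1.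
rewrite -addnS leq_add //; case E: (a1 y) => //=; by rewrite (Hs _ E).
Qed.

Lemma pred_ext (A B : point -> Prop) : (forall x, A x <-> B x) -> A = B.
Proof. by move=> H; apply: functional_extensionality => x; apply: propositional_extensionality. Qed.

Section Live.
Variable P : finType.
Variable pos : P -> point.
Variable C : nat -> config P.
Variable a : nat -> P.
Hypothesis Hperm : permitted pos.
Hypothesis Hexec : execution pos C a.
Hypothesis Hfair : fair a.
Local Notation Inv := (@Inv P pos).

Lemma Hstep t : dle_step (C t) (a t) (C t.+1).
Proof. by case: Hexec. Qed.

Lemma invt t : Inv (C t).
Proof.
elim: t => [|t IH]; first by case: Hexec => -> _; apply: init_inv.
exact: step_inv IH (Hstep t).
Qed.

Lemma Se_mono t d x : cSe (C (t + d)) x -> cSe (C t) x.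
Proof.
elim: d => [|d IH]; first by rewrite addn0.
by rewrite addnS => /(step_Se_sub (Hstep _)) /IH.
Qed.

Definition cnt t : nat := count (fun x => decb (cSe (C t) x)) (boxl (Ms pos)).

Lemma cnt_le t d : (cnt (t + d) <= cnt t)%N.
Proof.
apply: sub_count => x /decbP /Se_mono H; exact/decbP.
Qed.

Lemma cnt_lt t x : cSe (C t) x -> ~ cSe (C t.+1) x -> (cnt t.+1 < cnt t)%N.
Proof.
move=> h1 h2; apply: (@count_lt _ _ _ _ x).
- by move=> y /decbP /(step_Se_sub (Hstep _)) H; exact/decbP.
- by apply: area_cov; apply: (i_sub (invt t)).
- exact/decbP.
- by apply/negP => /decbP.
Qed.

Definition noLeader t := forall q, cstatus (C t) q <> Leader.

Lemma progress t : ~ (forall t', (t <= t')%N -> noLeader t' /\ (forall x, cSe (C t'.+1) x <-> cSe (C t') x)).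
Proof.
move=> H.
have frozen : forall d, (forall q, cstatus (C (t + d)) q = cstatus (C t) q /\ chead (C (t + d)) q = chead (C t) q)
    /\ (forall x, cSe (C (t + d)) x <-> cSe (C t) x).
  elim=> [|d [IH1 IH2]]; first by rewrite addn0.
  have [Hn He] := H (t + d)%N (leq_addr _ _).
  have [Hn' _] := H (t + d.+1)%N (leq_addr _ _).
  rewrite addnS in Hn' *; split.
    move=> q; have [e1 e2] := step_frozen (invt _) (Hstep (t + d)) He Hn' q.
    by rewrite e1 e2; apply: IH1.
  by move=> x; rewrite He.
have frz : forall s, (t <= s)%N -> (forall q, cstatus (C s) q = cstatus (C t) q /\ chead (C s) q = chead (C t) q)
    /\ cSe (C s) = cSe (C t).
  move=> s hs; rewrite -(subnKC hs); have [h1 h2] := frozen (s - t)%N.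
  by split=> //; apply: pred_ext.
set S0 := cSe (C t).
have I := invt t.
have [x0 Sx0] := i_ne I.
have NL := (H t (leqnn t)).1.
have [q [w [Hq Hw Hu Hmode]]] : exists q w, [/\ chead (C t) q = w, S0 w, cstatus (C t) q = Undecided &
   ((SCE S0 w /\ exists i, S0 (nb w i)) \/ (forall i, ~ S0 (nb w i)))].
  have getq : forall w, S0 w -> (exists i, ~ S0 (nb w i)) ->
      exists q, chead (C t) q = w /\ cstatus (C t) q = Undecided.
    move=> w Sw [i ni]; case: (i_free I Sw) => [[q [h1 h2]]|[_ Hint]]; last by case: (ni (Hint i)).
    exists q; split=> //; case E: (cstatus (C t) q) => //; by case: (NL q).
  case: (classic (exists x y, [/\ S0 x, S0 y & x <> y])) => [H2|H1].
    have Hcov : covered S0 (boxl (Ms pos)) by move=> x /(i_sub I) /area_cov.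
    have [w Hw] := exists_SCE Hcov (i_conn I) (i_hf I) H2.
    have Sw : S0 w by case: Hw => [[[]]].
    have [q [h1 h2]] := getq w Sw (match Hw with conj (And3 (conj _ b) _ _) _ => b end).
    exists q, w; split=> //; left; split=> //.
    case: H2 => x [y [Sx Sy xy]].
    have [z [Sz zw]] : exists z, S0 z /\ z <> w.
      case: (classic (x = w)) => [E|xw]; last by exists x.
      by exists y; split=> //; rewrite -E => E'; apply: xy.
    case: (reach_inv (i_conn I Sw Sz)) => [//|[y' [[i Ey] [Sy' _]]]].
    by exists i; rewrite -Ey.
  have single : forall x, S0 x -> x = x0.
    by move=> x Sx; apply: NNPP => xx; apply: H1; exists x, x0.
  have nn : forall i, ~ S0 (nb x0 i) by move=> i /single; apply: nb_neq.
  have [q [h1 h2]] := getq x0 Sx0 (ex_intro _ 0%N (nn 0%N)).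
  by exists q, x0; split=> //; right.
case: (Hfair q t) => t1 [ht1 at1].
have [t2 [ht2 [at2 Hc2]]] : exists t2, [/\ (t <= t2)%N, a t2 = q & ctail (C t2) q = chead (C t2) q].
  case: (classic (ctail (C t1) q = chead (C t1) q)) => Hc1; first by exists t1.
  have Hst1 := Hstep t1; rewrite at1 in Hst1.
  have [c1 _] := step_expanded (invt _) Hc1 Hst1.
  case: (Hfair q t1.+1) => t2 [ht2 at2]; exists t2; split=> //.
    by rewrite (leq_trans ht1) // ltnW.
  move: ht2; rewrite leq_eqVlt => /orP[/eqP<-//|].
  elim: t2 {at2} => // s IHs; rewrite ltnS leq_eqVlt => /orP[/eqP<-|hs].
    apply: (step_contracted (Hstep t1.+1)) => //.
    have hh := (frz t1.+2 _).1 q; have hh' := (frz t1.+1 _).1 q.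
    rewrite (hh (leq_trans ht1 (leqW (leqW (leqnn _))))).2.
    by rewrite (hh' (leq_trans ht1 (leqW (leqnn _)))).2.
  have ts : (t <= s)%N by rewrite (leq_trans ht1) // (leq_trans (leqW (leqnn _)) (ltnW hs)).
  apply: (step_contracted (Hstep s)); first exact: IHs.
  by rewrite ((frz s.+1 (leqW ts)).1 q).2 ((frz s ts).1 q).2.
have [F1 F2] := frz t2 ht2.
have Hu2 : cstatus (C t2) q = Undecided by rewrite (F1 q).1.
have Hh2 : chead (C t2) q = w by rewrite (F1 q).2.
have [NL2 E2] := H t2 ht2.
have Hst2 := Hstep t2; rewrite at2 in Hst2.
case: Hmode => [[HS [i Hi]]|Hn].
  have := step_active_erode (invt t2) Hu2 Hc2; rewrite Hh2 F2 => /(_ _ HS (ex_intro _ i Hi) Hst2).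
  by rewrite E2 F2.
have := step_active_leader (invt t2) Hu2 Hc2; rewrite Hh2 F2 => /(_ _ Hn Hst2).
by apply: (H t2.+1 (leqW ht2)).1.
Qed.

Lemma eventually_leader : exists t l, cstatus (C t) l = Leader.
Proof.
case: (classic (exists t l, cstatus (C t) l = Leader)) => // Hno.
exfalso.
have Hnl : forall t, noLeader t by move=> t q Hq; apply: Hno; exists t, q.
suff : forall n t, (cnt t < n)%N -> False by move/(_ (cnt 0).+1 0%N (ltnSn _)).
elim=> [//|n IH] t Ht.
case: (classic (exists t', (t <= t')%N /\ exists x, cSe (C t') x /\ ~ cSe (C t'.+1) x))
  => [[t' [ht' [x [h1 h2]]]]|Hnone].
  apply: (IH t'.+1); apply: (leq_trans (cnt_lt h1 h2)).
  rewrite -ltnS (leq_trans _ Ht) // ltnS -(subnKC ht'); exact: cnt_le.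
apply: (progress (t := t)) => t' ht'; split; first exact: Hnl.
move=> x; split; first exact: (step_Se_sub (Hstep t')).
by move=> h1; apply: NNPP => h2; apply: Hnone; exists t'; split=> //; exists x.
Qed.

Lemma main_result : (forall p : P, exists t, cfinal (C t) p) /\
    (exists t, exists l : P, cstatus (C t) l = Leader /\
        forall q : P, q <> l -> cstatus (C t) q = Follower).
Proof.
have [tL [l Hl]] := eventually_leader.
have Hfol : forall q, q <> l -> cstatus (C tL) q = Follower := i_lead (invt tL) Hl.
have Hdec0 : forall q, cstatus (C tL) q <> Undecided.
  move=> q; case: (classic (q = l)) => [->|ql]; first by rewrite Hl.
  by rewrite Hfol.
have Hdec : forall d q, cstatus (C (tL + d)) q = cstatus (C tL) q.
  elim=> [|d IH] q; first by rewrite addn0.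
  rewrite addnS (step_decided _ (Hstep _)) //.
  by move=> r; rewrite IH; apply: Hdec0.
split; last by exists tL, l.
move=> p; case: (Hfair p tL) => t [ht hat].
case: (classic (cfinal (C t) p)) => Hf; first by exists t.
exists t.+1; have Hst := Hstep t; rewrite hat in Hst.
apply: (step_final (invt t)) Hst; first by apply/negP.
by move=> r; rewrite -(subnKC ht) Hdec; apply: Hdec0.
Qed.

End Live.


Theorem theorem4p3 (P : finType) (pos : P -> point) :
  permitted pos ->
  forall (C : nat -> config P) (a : nat -> P),
    execution pos C a -> fair a ->
    (forall p : P, exists t, cfinal (C t) p) /\
    (exists t, exists l : P, cstatus (C t) l = Leader /\
        forall q : P, q <> l -> cstatus (C t) q = Follower).
Proof.
move=> Hp C a He Hf.
exact: (main_result Hp He Hf).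
Qed.
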